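(* Let $\kappa,\lambda\in\mathbb{R}$, let ${\rm Y}$ be a locally ${\sf CAT}(\kappa)$ space and let ${\sf E}\colon{\rm Y}\to\mathbb{R}\cup\{+\infty\}$ be $\lambda$-convex and lower semicontinuous. Then for every $y\in D(-\partial^-{\sf E})$ \[ |\partial^-{\sf E}|(y)\le\inf_{v\in-\partial^-{\sf E}(y)}|v|_y . \] In particular $D(-\partial^-{\sf E})\subset D(|\partial^-{\sf E}|)$.
   Context: Locally ${\sf CAT}(\kappa)$ space: complete geodesic metric space $({\rm Y},{\sf d}_{\rm Y})$ in which each point has a neighbourhood that is ${\sf CAT}(\kappa)$ (geodesic triangles of perimeter $<2D_\kappa$ are thinner than comparison triangles in the model plane $\mathbb{M}_\kappa$ of constant curvature $\kappa$; $D_\kappa=\pi/\sqrt\kappa$ if $\kappa>0$, $\infty$ otherwise). Tangent cone ${\rm T}_y{\rm Y}$: completion of the space of constant speed geodesics $\gamma$ emanating from $y$ (defined on some $[0,\varepsilon)$), modulo ${\sf d}_y(\gamma,\eta):=\lim_{t\downarrow0}{\sf d}_{\rm Y}(\gamma_t,\eta_t)/t=0$, with distance ${\sf d}_y$; $\gamma'_0$ is the class of $\gamma$, $0_y$ that of the constant curve, $|v|_y:={\sf d}_y(v,0_y)$, $\langle v,w\rangle_y:=\frac12(|v|_y^2+|w|_y^2-{\sf d}_y^2(v,w))$. $\lambda$-convexity: ${\sf E}(\gamma_t)\le(1-t){\sf E}(\gamma_0)+t{\sf E}(\gamma_1)-\frac\lambda2t(1-t){\sf d}^2_{\rm Y}(\gamma_0,\gamma_1)$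 along every constant speed geodesic $\gamma\colon[0,1]\to{\rm Y}$; $D({\sf E})=\{{\sf E}<\infty\}$. Slope: $|\partial^-{\sf E}|(y):=\limsup_{z\to y}\frac{({\sf E}(y)-{\sf E}(z))^+}{{\sf d}_{\rm Y}(y,z)}$ for $y\in D({\sf E})$, and $D(|\partial^-{\sf E}|)$ is the set where it is finite. Minus-subdifferential: for $y\in D({\sf E})$, $-\partial^-{\sf E}(y)$ is the set of $v\in{\rm T}_y{\rm Y}$ such that for every $z\in{\rm Y}$ there is a geodesic $\gamma\colon[0,1]\to{\rm Y}$ from $y$ to $z$ with ${\sf E}(y)-\langle v,\gamma'_0\rangle_y+\frac\lambda2{\sf d}^2_{\rm Y}(y,z)\le{\sf E}(z)$; $D(-\partial^-{\sf E})$ is the set of $y$ where this set is nonempty. *)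

(* Defs.v *)
From Stdlib Require Import Reals Lra ClassicalEpsilon.
From Coquelicot Require Import Coquelicot.
Open Scope R_scope.
Set Implicit Arguments.

(* ---------- generic limits (values chosen by Hilbert epsilon; the limits
   exist in the situations where they are used) ---------- *)
Definition right_lim_is (f : R -> R) (l : R) : Prop :=
  forall eps, 0 < eps -> exists delta, 0 < delta /\
    forall t, 0 < t < delta -> Rabs (f t - l) < eps.
Definition right_lim0 (f : R -> R) : R := epsilon (inhabits 0) (right_lim_is f).
Definition seq_lim (u : nat -> R) : R := epsilon (inhabits 0) (Un_cv u).

Section Metric.
Variable Y : Type.
Variable d : Y -> Y -> R.

Definition is_metric : Prop :=
  (forall x y, d x y = 0 <-> x = y) /\
  (forall x y, d x y = d y x) /\
  (forall x y z, d x z <= d x y + d y z).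

Definition complete : Prop :=
  forall u : nat -> Y,
    (forall eps, 0 < eps -> exists N, forall m n, (N <= m)%nat -> (N <= n)%nat -> d (u m) (u n) < eps) ->
    exists l, forall eps, 0 < eps -> exists N, forall n, (N <= n)%nat -> d (u n) l < eps.

Definition geod (g : R -> Y) (a b : Y) : Prop :=
  g 0 = a /\ g 1 = b /\
  forall s t, 0 <= s <= 1 -> 0 <= t <= 1 -> d (g s) (g t) = Rabs (s - t) * d a b.

Definition geodesic_space : Prop := forall a b, exists g, geod g a b.

Definition lsc (E : Y -> Rbar) : Prop :=
  forall y (c : R), Rbar_lt (Finite c) (E y) ->
    exists delta, 0 < delta /\ forall z, d y z < delta -> Rbar_lt (Finite c) (E z).

(* lambda-convexity along every constant speed geodesic gamma : [0,1] -> Y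
   (trivial when an endpoint has infinite energy, hence stated for finite endpoints) *)
Definition lambda_convex (lam : R) (E : Y -> Rbar) : Prop :=
  forall g a b, geod g a b -> forall (ea eb : R), E a = Finite ea -> E b = Finite eb ->
    forall t, 0 <= t <= 1 ->
      Rbar_le (E (g t)) (Finite ((1 - t) * ea + t * eb - lam / 2 * t * (1 - t) * (d a b) ^ 2)).

(* kappa = 0 : plane x3 = 0 with Euclidean distance;
   kappa > 0 : sphere of radius 1/sqrt kappa with intrinsic distance;
   kappa < 0 : hyperboloid x1^2+x2^2-x3^2 = 1/kappa, x3 > 0, hyperbolic distance *)
Definition pt3 := (R * R * R)%type.
Definition arcosh (u : R) : R := ln (u + sqrt (u ^ 2 - 1)).

Definition model_pt (kappa : R) (x : pt3) : Prop :=
  let '(x1, x2, x3) := x in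
  (kappa = 0 /\ x3 = 0) \/
  (0 < kappa /\ x1 ^ 2 + x2 ^ 2 + x3 ^ 2 = 1 / kappa) \/
  (kappa < 0 /\ x1 ^ 2 + x2 ^ 2 - x3 ^ 2 = 1 / kappa /\ 0 < x3).

Definition model_dist (kappa : R) (x y : pt3) : R :=
  let '(x1, x2, x3) := x in let '(y1, y2, y3) := y in
  if Req_EM_T kappa 0 then sqrt ((x1 - y1) ^ 2 + (x2 - y2) ^ 2 + (x3 - y3) ^ 2)
  else if Rlt_dec 0 kappa then / sqrt kappa * acos (kappa * (x1 * y1 + x2 * y2 + x3 * y3))
  else / sqrt (- kappa) * arcosh (- kappa * (x3 * y3 - x1 * y1 - x2 * y2)).

(* p < D_kappa resp. p < 2 D_kappa, with D_kappa = pi/sqrt kappa (kappa>0), +oo otherwise *)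
Definition lt_Dk (kappa p : R) : Prop := kappa <= 0 \/ p < PI / sqrt kappa.
Definition lt_2Dk (kappa p : R) : Prop := kappa <= 0 \/ p < 2 * (PI / sqrt kappa).

Definition on_model_seg (kappa : R) (A B : pt3) (s : R) (X : pt3) : Prop :=
  model_pt kappa X /\ model_dist kappa A X = s * model_dist kappa A B /\
  model_dist kappa X B = (1 - s) * model_dist kappa A B.

Definition geod_in (U : Y -> Prop) (g : R -> Y) : Prop :=
  forall s, 0 <= s <= 1 -> U (g s).

(* every geodesic triangle in U (vertices p q r, sides g1 : p->q, g2 : q->r,
   g3 : r->p lying in U) with perimeter < 2 D_kappa is thinner than any comparison
   triangle P Q R in M_kappa *)
Definition tri_side (g1 g2 g3 : R -> Y) (P Q Rr : pt3) (k : nat) : (R -> Y) * pt3 * pt3 :=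
  match k with 0%nat => (g1, P, Q) | 1%nat => (g2, Q, Rr) | _ => (g3, Rr, P) end.

Definition CAT_set (kappa : R) (U : Y -> Prop) : Prop :=
  (forall a b, U a -> U b -> lt_Dk kappa (d a b) -> exists g, geod g a b /\ geod_in U g) /\
  (forall p q r g1 g2 g3,
     geod g1 p q -> geod g2 q r -> geod g3 r p ->
     geod_in U g1 -> geod_in U g2 -> geod_in U g3 ->
     lt_2Dk kappa (d p q + d q r + d r p) ->
     forall P Q Rr, model_pt kappa P -> model_pt kappa Q -> model_pt kappa Rr ->
       model_dist kappa P Q = d p q -> model_dist kappa Q Rr = d q r ->
       model_dist kappa Rr P = d r p ->
       forall k l s t X Z, (k < 3)%nat -> (l < 3)%nat -> 0 <= s <= 1 -> 0 <= t <= 1 ->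
         let '(g, A, B) := tri_side g1 g2 g3 P Q Rr k in
         let '(h, A', B') := tri_side g1 g2 g3 P Q Rr l in
         on_model_seg kappa A B s X -> on_model_seg kappa A' B' t Z ->
         d (g s) (h t) <= model_dist kappa X Z).

Definition locally_CAT (kappa : R) : Prop :=
  forall y, exists U : Y -> Prop, CAT_set kappa U /\
    exists r, 0 < r /\ forall z, d y z < r -> U z.

Definition germ (y : Y) (g : R -> Y) : Prop :=
  g 0 = y /\ exists eps c, 0 < eps /\ 0 <= c /\
    forall s t, 0 <= s < eps -> 0 <= t < eps -> d (g s) (g t) = c * Rabs (s - t).

Definition dgerm (g h : R -> Y) : R := right_lim0 (fun t => d (g t) (h t) / t).

(* elements of the completion T_y Y are represented by d_y-Cauchy sequences of
   geodesics emanating from y; the (pseudo)distance is the limit of distances *)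
Definition tvec (y : Y) (v : nat -> R -> Y) : Prop :=
  (forall n, germ y (v n)) /\
  (forall eps, 0 < eps -> exists N, forall m n, (N <= m)%nat -> (N <= n)%nat ->
     dgerm (v m) (v n) < eps).

Definition tdist (v w : nat -> R -> Y) : R := seq_lim (fun n => dgerm (v n) (w n)).
Definition tzero (y : Y) : nat -> R -> Y := fun _ _ => y.
Definition tnorm (y : Y) (v : nat -> R -> Y) : R := tdist v (tzero y).
Definition tinner (y : Y) (v w : nat -> R -> Y) : R :=
  / 2 * ((tnorm y v) ^ 2 + (tnorm y w) ^ 2 - (tdist v w) ^ 2).
Definition tclass (g : R -> Y) : nat -> R -> Y := fun _ => g.

Definition in_dom (E : Y -> Rbar) (y : Y) : Prop := is_finite (E y).

Definition slope_quot (E : Y -> Rbar) (y z : Y) : R :=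
  match E z with
  | Finite ez => Rmax 0 (real (E y) - ez) / d y z
  | _ => 0
  end.

(* |d^- E|(y) = limsup_{z -> y} (E(y)-E(z))^+ / d(y,z)
             = inf_{r>0} sup_{0<d(y,z)<r} ...   (the value 0 is included in the
   sup, which only matters at isolated points) *)
Definition slope (E : Y -> Rbar) (y : Y) : Rbar :=
  Glb_Rbar (fun s => exists r, 0 < r /\
     Lub_Rbar (fun q => q = 0 \/ exists z, 0 < d y z < r /\ q = slope_quot E y z) = Finite s).

Definition minus_subdiff (lam : R) (E : Y -> Rbar) (y : Y) (v : nat -> R -> Y) : Prop :=
  in_dom E y /\ tvec y v /\
  forall z, exists g, geod g y z /\
    Rbar_le (Finite (real (E y) - tinner y v (tclass g) + lam / 2 * (d y z) ^ 2)) (E z).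

Definition in_dom_subdiff (lam : R) (E : Y -> Rbar) (y : Y) : Prop :=
  in_dom E y /\ exists v, minus_subdiff lam E y v.

End Metric.

(* Main.v *)
Require Import Defs.
From Stdlib Require Import Reals.
From Coquelicot Require Import Coquelicot.
From Stdlib Require Import Lra Psatz Classical ClassicalEpsilon FunctionalExtensionality.
Open Scope R_scope.


Lemma smallT a b eps T : 0 < a -> 0 < b -> 0 < eps -> 0 < T -> T * (a + b + eps)^2 <= eps / 2 ->
  T * (a + b + eps) <= 1/2.
Proof. intros. set (s := a + b + eps) in *.
  assert (T * s * eps <= T * s * s) by (apply Rmult_le_compat_l; unfold s in *; nra).
  apply Rmult_le_reg_r with eps; [lra|]. nra. Qed.

Lemma cos_lb2 x : - PI/2 <= x <= PI/2 -> 1 - x^2/2 <= cos x.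
Proof.
  intros H. destruct (cos_bound x 0 ltac:(lra) ltac:(lra)) as [H1 _].
  unfold cos_approx, cos_term in H1. simpl in H1. lra.
Qed.
Lemma cos_ub4 x : - PI/2 <= x <= PI/2 -> cos x <= 1 - x^2/2 + x^4/24.
Proof.
  intros H. destruct (cos_bound x 0 ltac:(lra) ltac:(lra)) as [_ H1].
  unfold cos_approx, cos_term in H1. simpl in H1. lra.
Qed.
Lemma sin_lb3 x : 0 <= x <= PI -> x - x^3/6 <= sin x.
Proof.
  intros H. destruct (sin_bound x 0 ltac:(lra) ltac:(lra)) as [H1 _].
  unfold sin_approx, sin_term in H1. simpl in H1. lra.
Qed.
Lemma sin_ub1 x : 0 <= x <= 1 -> sin x <= x.
Proof.
  intros H. pose proof PI2_1. destruct (sin_bound x 0 ltac:(lra) ltac:(lra)) as [_ H1].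
  unfold sin_approx, sin_term in H1. simpl in H1.
  assert (0<=x^2<=1) by nra. assert (0<= x^3) by nra.
  assert (x^5 <= x^3) by nra.
  lra.
Qed.


Lemma mono_deriv (F dF : R -> R) a b : a <= b ->
  (forall x, a <= x <= b -> is_derive F x (dF x)) ->
  (forall x, a <= x <= b -> 0 <= dF x) -> F a <= F b.
Proof.
  intros Hab HD Hp.
  destruct (MVT_gen F a b dF) as [c [Hc Heq]].
  - intros x Hx. rewrite Rmin_left in Hx by lra. rewrite Rmax_right in Hx by lra.
    apply HD; lra.
  - intros x Hx. rewrite Rmin_left in Hx by lra. rewrite Rmax_right in Hx by lra.
    apply derivable_continuous_pt. exists (dF x). apply is_derive_Reals. apply HD; lra.
  - rewrite Rmin_left in Hc by lra. rewrite Rmax_right in Hc by lra.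
    specialize (Hp c Hc). nra.
Qed.

Lemma cosh_der x : is_derive cosh x (sinh x).
Proof. unfold cosh, sinh. auto_derive; auto. field. Qed.
Lemma sinh_der x : is_derive sinh x (cosh x).
Proof. unfold cosh, sinh. auto_derive; auto. field. Qed.

Lemma sinh_nonneg x : 0 <= x -> 0 <= sinh x.
Proof. intros H. destruct H as [H|H]. rewrite <- sinh_0. left. now apply sinh_lt. subst; rewrite sinh_0; lra. Qed.

Lemma cosh_mono x y : 0 <= x <= y -> cosh x <= cosh y.
Proof. intros H. apply (mono_deriv cosh sinh); try lra. intros; apply cosh_der.
  intros; apply sinh_nonneg; lra. Qed.

Lemma cosh_even x : cosh (- x) = cosh x.
Proof. unfold cosh. rewrite Ropp_involutive. lra. Qed.
Lemma sinh_odd x : sinh (- x) = - sinh x.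
Proof. unfold sinh. rewrite Ropp_involutive. lra. Qed.

Lemma cosh_ge1 x : 0 <= x -> 1 <= cosh x.
Proof. intros. rewrite <- cosh_0. apply cosh_mono; lra. Qed.

Lemma sinh_ge x : 0 <= x -> x <= sinh x.
Proof. intros H.
  assert (sinh 0 - 0 <= sinh x - x); [|rewrite sinh_0 in H0; lra].
  apply (mono_deriv (fun x => sinh x - x) (fun x => cosh x - 1)); try lra.
  - intros. unfold sinh, cosh. auto_derive; auto. field.
  - intros. pose proof (cosh_ge1 x0). lra.
Qed.

Lemma cosh_lb x : 0 <= x -> 1 + x^2/2 <= cosh x.
Proof. intros H.
  assert (cosh 0 - 1 - 0^2/2 <= cosh x - 1 - x^2/2); [|rewrite cosh_0 in H0; lra].
  apply (mono_deriv (fun x => cosh x - 1 - x^2/2) (fun x => sinh x - x)); try lra.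
  - intros. unfold sinh, cosh. auto_derive; auto. field.
  - intros. pose proof (sinh_ge x0). lra.
Qed.

Lemma cosh_le2 x : 0 <= x <= 1 -> cosh x <= 2.
Proof. intros H. apply Rle_trans with (cosh 1). apply cosh_mono; lra.
  unfold cosh. pose proof exp_le_3. rewrite exp_Ropp.
  assert (1 <= exp 1). { pose proof (exp_ineq1 1 ltac:(lra)). lra. }
  assert (/ exp 1 <= 1). { pose proof (Rinv_le_contravar 1 (exp 1) ltac:(lra) H1) as H2. rewrite Rinv_1 in H2. exact H2. }
  lra.
Qed.

Lemma sinh_le2x x : 0 <= x <= 1 -> sinh x <= 2 * x.
Proof. intros H.
  assert (2*0 - sinh 0 <= 2*x - sinh x); [|rewrite sinh_0 in H0; lra].
  apply (mono_deriv (fun x => 2*x - sinh x) (fun x => 2 - cosh x)); try lra.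
  - intros. unfold sinh, cosh. auto_derive; auto. field.
  - intros. pose proof (cosh_le2 x0). lra.
Qed.

Lemma cosh_le_1x2 x : 0 <= x <= 1 -> cosh x <= 1 + x^2.
Proof. intros H.
  assert (1 + 0^2 - cosh 0 <= 1 + x^2 - cosh x); [|rewrite cosh_0 in H0; lra].
  apply (mono_deriv (fun x => 1 + x^2 - cosh x) (fun x => 2*x - sinh x)); try lra.
  - intros. unfold sinh, cosh. auto_derive; auto. field.
  - intros. pose proof (sinh_le2x x0). lra.
Qed.

Lemma sinh_ub x : 0 <= x <= 1 -> sinh x <= x + x^3/3.
Proof. intros H.
  assert (0 + 0^3/3 - sinh 0 <= x + x^3/3 - sinh x); [|rewrite sinh_0 in H0; lra].
  apply (mono_deriv (fun x => x + x^3/3 - sinh x) (fun x => 1 + x^2 - cosh x)); try lra.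
  - intros. unfold sinh, cosh. auto_derive; auto. field.
  - intros. pose proof (cosh_le_1x2 x0). lra.
Qed.

Lemma cosh_ub x : 0 <= x <= 1 -> cosh x <= 1 + x^2/2 + x^4/12.
Proof. intros H.
  assert (1 + 0^2/2 + 0^4/12 - cosh 0 <= 1 + x^2/2 + x^4/12 - cosh x); [|rewrite cosh_0 in H0; lra].
  apply (mono_deriv (fun x => 1 + x^2/2 + x^4/12 - cosh x) (fun x => x + x^3/3 - sinh x)); try lra.
  - intros. unfold sinh, cosh. auto_derive; auto. field.
  - intros. pose proof (sinh_ub x0). lra.
Qed.

Lemma cosh_minus x y : cosh (x - y) = cosh x * cosh y - sinh x * sinh y.
Proof. unfold cosh, sinh. replace (x - y) with (x + - y) by ring.
  replace (- (x + - y)) with (- x + y) by ring. rewrite !exp_plus, !exp_Ropp.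
  field. split; apply Rgt_not_eq, exp_pos. Qed.
Lemma cosh_plus x y : cosh (x + y) = cosh x * cosh y + sinh x * sinh y.
Proof. unfold cosh, sinh.
  replace (- (x + y)) with (- x + - y) by ring. rewrite !exp_plus, !exp_Ropp.
  field. split; apply Rgt_not_eq, exp_pos. Qed.
Lemma cosh_sinh x : cosh x ^ 2 - sinh x ^ 2 = 1.
Proof. unfold cosh, sinh. rewrite !exp_Ropp. field. apply Rgt_not_eq, exp_pos. Qed.


Lemma cos_decr x y : 0 <= x -> x <= y -> y <= PI -> cos y <= cos x.
Proof. intros. destruct (Req_dec x y). subst; lra. left; apply cos_decreasing_1; lra. Qed.

Lemma sphere_core a b eps T C sg : 0 < a -> 0 < b -> 0 < eps -> 0 < T ->
  T * (a + b + eps)^2 <= eps / 2 ->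
  Rabs (a - b) * T <= C <= (a + b) * T -> 0 < sg < 1 ->
  let A := a * T in let B := b * T in
  let k := (cos C - cos A * cos B) / (sin A * sin B) in
  -1 <= k <= 1 /\
  cos (sg * (C + eps * T)) <= cos (sg * A) * cos (sg * B) + sin (sg * A) * sin (sg * B) * k.
Proof.
  intros ha hb he hT hsmall hC hsg A B k.
  pose proof PI2_1 as HPI.
  set (s := a + b).
  assert (hs : 0 < s) by (unfold s; lra).
  assert (hsT : s * T <= 1/2).
  { assert (T * (s + eps) * (s+eps) <= eps/2) by (unfold s in *; nra).
    assert (T * (s+eps) * eps <= T * (s + eps) * (s+eps)) by (apply Rmult_le_compat_l; nra).
    assert (T * (s+eps) <= 1/2).
    { apply Rmult_le_reg_r with eps; nra. }
    nra. }
  assert (hA : 0 < A) by (unfold A; nra).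
  assert (hB : 0 < B) by (unfold B; nra).
  assert (hAB : A + B <= 1/2) by (unfold A, B, s in *; nra).
  assert (hu : Rabs (A - B) <= C).
  { unfold A, B. replace (a*T - b*T) with ((a-b)*T) by ring. rewrite Rabs_mult, (Rabs_right T) by lra. lra. }
  assert (hC2 : C <= A + B) by (unfold A, B; lra).
  assert (hsA : 0 < sin A) by (apply sin_gt_0; lra).
  assert (hsB : 0 < sin B) by (apply sin_gt_0; lra).
  assert (hq : 0 < sin A * sin B) by nra.
  assert (hkdef : sin A * sin B * k = cos C - cos A * cos B).
  { unfold k. field. lra. }
  assert (hcu : cos (A - B) = cos (Rabs (A - B))).
  { destruct (Rle_dec 0 (A - B)). rewrite Rabs_right; lra. rewrite Rabs_left by lra. now rewrite cos_neg. }
  assert (hD : 0 <= cos (A - B) - cos C).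
  { rewrite hcu. pose proof (cos_decr (Rabs (A - B)) C (Rabs_pos _) hu ltac:(lra)). lra. }
  assert (hk1 : k <= 1).
  { rewrite cos_minus in hD. apply Rmult_le_reg_l with (sin A * sin B); nra. }
  assert (hk2 : -1 <= k).
  { pose proof (cos_decr C (A + B) ltac:(pose proof (Rabs_pos (A-B)); lra) hC2 ltac:(lra)).
    rewrite cos_plus in H. apply Rmult_le_reg_l with (sin A * sin B); nra. }
  split; [lra|].
  set (x := sg * A). set (y := sg * B). set (u := A - B). set (dl := eps * T).
  set (Dl := cos u - cos C).
  assert (hx : 0 < x <= A) by (unfold x; nra).
  assert (hy : 0 < y <= B) by (unfold y; nra).
  assert (hW : cos x * cos y + sin x * sin y * k = cos (x - y) - sin x * sin y * (1 - k)).
  { rewrite cos_minus. ring. }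
  rewrite hW.
  assert (hxy : x - y = sg * u) by (unfold x, y, u; ring).
  assert (hsx : 0 <= sin x <= x) by (split; [left; apply sin_gt_0; lra | apply sin_ub1; lra]).
  assert (hsy : 0 <= sin y <= y) by (split; [left; apply sin_gt_0; lra | apply sin_ub1; lra]).
  assert (hp : sin x * sin y <= sg^2 * (A * B)).
  { apply Rle_trans with (x * y). apply Rmult_le_compat; lra. unfold x, y. nra. }
  assert (hlA : A - A^3/6 <= sin A) by (apply sin_lb3; lra).
  assert (hlB : B - B^3/6 <= sin B) by (apply sin_lb3; lra).
  set (D0 := 1 - (A^2 + B^2)/6).
  assert (hqD : A * B * D0 <= sin A * sin B).
  { apply Rle_trans with ((A - A^3/6) * (B - B^3/6)).
    - unfold D0. assert (0 <= A^2 <= 1/4) by nra. assert (0 <= B^2 <= 1/4) by nra.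
      assert (0 <= A*B) by nra. 
      replace ((A - A^3/6) * (B - B^3/6)) with (A*B*(1 - A^2/6 - B^2/6 + A^2*B^2/36)) by (unfold A, B; field).
      apply Rmult_le_compat_l. lra. nra.
    - apply Rmult_le_compat; try nra. }
  set (M := 1 + (A^2 + B^2)/3).
  assert (hMD : 1 <= M * D0).
  { unfold M, D0. assert (0 <= A^2 + B^2 <= 1/4) by nra. nra. }
  assert (h1k : 0 <= 1 - k) by lra.
  assert (hABk : A * B * (1 - k) <= M * Dl).
  { assert (A * B * (1-k) * D0 <= Dl).
    { unfold Dl, u. rewrite cos_minus. apply Rle_trans with (sin A * sin B * (1 - k)).
      replace (A * B * (1 - k) * D0) with (A * B * D0 * (1-k)) by ring.
      apply Rmult_le_compat_r; lra. nra. }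
    assert (0 <= A * B * (1 - k)) by (apply Rmult_le_pos; nra).
    apply Rle_trans with (A * B * (1 - k) * (M * D0)). nra.
    assert (0 <= M) by (unfold M; nra). nra. }
  assert (hpk : sin x * sin y * (1 - k) <= sg^2 * M * Dl).
  { apply Rle_trans with (sg^2 * (A * B) * (1-k)). apply Rmult_le_compat_r; lra.
    replace (sg ^ 2 * (A * B) * (1 - k)) with (sg^2 * (A * B * (1-k))) by ring.
    replace (sg ^ 2 * M * Dl) with (sg^2 * (M * Dl)) by ring.
    apply Rmult_le_compat_l; nra. }
  assert (hDl : Dl <= (C^2 - u^2)/2 + u^4/24).
  { unfold Dl. assert (H1: -PI/2 <= u <= PI/2) by (unfold u; lra). assert (H2: -PI/2 <= C <= PI/2) by (pose proof (Rabs_pos (A-B)); lra). pose proof (cos_ub4 u H1). pose proof (cos_lb2 C H2). lra. }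
  assert (hCpos : 0 <= C) by (pose proof (Rabs_pos (A-B)); lra).
  assert (hu' : -1/2 <= u <= 1/2) by (unfold u; lra).
  assert (hcxy : 1 - sg^2 * u^2/2 <= cos (x - y)).
  { rewrite hxy. assert (H1 : -PI/2 <= sg * u <= PI/2).
    { assert (-1/2 <= sg*u <= 1/2) by (clear - hu' hsg; split; nra). lra. }
    pose proof (cos_lb2 (sg * u) H1). replace ((sg*u)^2) with (sg^2*u^2) in H by ring. lra. }
  assert (hCd : 0 <= C + dl <= (s + eps) * T).
  { unfold dl, s. assert (0 <= eps*T) by (apply Rmult_le_pos; lra). split; lra. }
  assert (hcub : cos (sg * (C + dl)) <= 1 - sg^2 * (C+dl)^2/2 + sg^4 * (C+dl)^4/24).
  { pose proof (cos_ub4 (sg * (C + dl))). 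
    assert ((s+eps)*T <= 1/2) by (pose proof (smallT a b eps T ha hb he hT hsmall); unfold s; lra).
    assert (hq1 : 0 <= sg * (C+dl)) by (apply Rmult_le_pos; lra).
    assert (hq2 : sg*(C+dl) <= 1 * (C+dl)) by (apply Rmult_le_compat_r; lra).
    assert (- PI/2 <= sg * (C + dl) <= PI/2) by lra. specialize (H H1).
    replace ((sg*(C+dl))^2) with (sg^2*(C+dl)^2) in H by ring.
    replace ((sg*(C+dl))^4) with (sg^4*(C+dl)^4) in H by ring. lra. }
  fold dl.
  assert (hABs : A + B = s * T) by (unfold A, B, s; ring).
  assert (hAB2 : A^2 + B^2 <= s^2*T^2) by (replace (s^2*T^2) with ((A+B)^2) by (rewrite hABs; ring); clear - hA hB; nra).
  assert (hsT2 : s^2*T^2 <= 1/4) by (replace (s^2*T^2) with ((s*T)^2) by ring; replace (1/4) with ((1/2)^2) by field; apply pow_incr; split; [apply Rmult_le_pos|]; lra).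
  assert (hM1 : M - 1 <= s^2 * T^2) by (unfold M; pose proof (pow2_ge_0 A); pose proof (pow2_ge_0 B); lra).
  assert (hM2 : M <= 2) by (unfold M; lra).
  assert (hu2 : u^2 <= C^2).
  { fold u in hu. destruct (Rle_dec 0 u). rewrite Rabs_right in hu by lra. apply pow_incr; lra. rewrite Rabs_left in hu by lra. replace (u^2) with ((-u)^2) by ring. apply pow_incr; lra. }
  assert (hC2' : C^2 <= s^2 * T^2) by (replace (s^2*T^2) with ((s*T)^2) by ring; apply pow_incr; unfold s; lra).
  assert (hkey : u^2 + M * (C^2 - u^2) + M * u^4/12 + (C + dl)^4/12 <= (C + dl)^2).
  { assert (hdl : dl = eps * T) by reflexivity.
    assert (hCs : C <= s * T) by (unfold s; lra).
    assert (hu4 : u^4 <= s^4 * T^4).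
    { replace (u^4) with ((u^2)^2) by ring. replace (s^4 * T^4) with ((s^2*T^2)^2) by ring.
      apply pow_incr. split. apply pow2_ge_0. lra. }
    assert (hCd4 : (C+dl)^4 <= (s+eps)^4 * T^4).
    { replace ((s+eps)^4 * T^4) with (((s+eps)*T)^4) by ring. apply pow_incr. lra. }
    assert (hs4 : s^4 <= (s+eps)^4) by (apply pow_incr; lra).
    assert (hM1' : (M - 1) * (C^2 - u^2) <= s^2*T^2 * (s^2 * T^2)).
    { apply Rmult_le_compat; try lra. unfold M. pose proof (pow2_ge_0 A); pose proof (pow2_ge_0 B); lra. pose proof (pow2_ge_0 u); lra. }
    assert (hTe : T * (s+eps)^2 <= eps/2) by (unfold s; lra).
    assert (hT2 : T^2 * (s+eps)^4 <= eps^2/4).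
    { replace (T^2 * (s+eps)^4) with ((T * (s+eps)^2)^2) by ring.
      replace (eps^2/4) with ((eps/2)^2) by field. apply pow_incr. split; [|lra].
      apply Rmult_le_pos; [lra|apply pow2_ge_0]. }
    assert (hT4 : (s+eps)^4 * T^4 <= eps^2 * T^2 / 4).
    { replace ((s+eps)^4 * T^4) with (T^2 * (T^2 * (s+eps)^4)) by ring.
      replace (eps^2 * T^2 / 4) with (T^2 * (eps^2/4)) by field. apply Rmult_le_compat_l; [apply pow2_ge_0|exact hT2]. }
    assert (hT4' : s^4 * T^4 <= (s+eps)^4 * T^4) by (apply Rmult_le_compat_r; [apply pow_le; lra|exact hs4]).
    assert (hdl0 : 0 <= dl) by (unfold dl; apply Rmult_le_pos; lra). assert (hCdl : C^2 + dl^2 <= (C+dl)^2) by (assert (0 <= C*dl) by (apply Rmult_le_pos; lra); replace ((C+dl)^2) with (C^2+dl^2+2*(C*dl)) by ring; lra).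
    assert (hdl2 : dl^2 = eps^2 * T^2) by (unfold dl; ring).
    assert (hMu : M * u^4 <= 2 * u^4) by (apply Rmult_le_compat_r; [replace (u^4) with ((u^2)^2) by ring; apply pow2_ge_0|exact hM2]).
    assert (hexp : u^2 + M * (C^2 - u^2) = C^2 + (M-1)*(C^2-u^2)) by ring.
    rewrite hexp. replace (s^2*T^2*(s^2*T^2)) with (s^4*T^4) in hM1' by ring. rewrite hdl2 in hCdl.
    assert (0 <= eps^2*T^2) by (apply Rmult_le_pos; apply pow2_ge_0). lra. }
  assert (hsg1 : 0 <= sg^2 <= 1) by (split; [apply pow2_ge_0| assert (sg^2 <= 1^2) by (apply pow_incr; lra); rewrite pow1 in *; lra]).
  assert (hsg2 : sg^4 <= sg^2) by (replace (sg^4) with (sg^2*sg^2) by ring; assert (sg^2*sg^2 <= sg^2*1) by (apply Rmult_le_compat_l; lra); lra).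
  assert (hC4 : 0 <= (C+dl)^4) by (apply pow_le; lra).
  assert (h4 : sg^4 * (C+dl)^4 <= sg^2 * (C+dl)^4) by (apply Rmult_le_compat_r; lra).
  assert (hM0 : 0 <= M) by (unfold M; pose proof (pow2_ge_0 A); pose proof (pow2_ge_0 B); lra).
  assert (h5 : sg^2 * M * Dl <= sg^2 * M * ((C^2 - u^2)/2 + u^4/24)) by (apply Rmult_le_compat_l; [apply Rmult_le_pos; lra|exact hDl]).
  assert (h6 : sg^2 * (u^2 + M * (C^2 - u^2) + M * u^4/12 + (C + dl)^4/12) <= sg^2 * (C+dl)^2) by (apply Rmult_le_compat_l; lra).
  assert (e1 : sg ^ 2 * M * ((C ^ 2 - u ^ 2) / 2 + u ^ 4 / 24) = sg^2 * (M * (C^2 - u^2))/2 + sg^2 * (M * u^4/12)/2) by field.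
  assert (e2 : sg ^ 2 * (u ^ 2 + M * (C ^ 2 - u ^ 2) + M * u ^ 4 / 12 + (C + dl) ^ 4 / 12) = sg^2 * u^2 + sg^2 * (M * (C^2 - u^2)) + sg^2 * (M * u^4/12) + sg^2 * (C+dl)^4/12) by field.
  rewrite e1 in h5. rewrite e2 in h6.
  lra.
Qed.


Lemma cosh_lb_all x : 1 + x^2/2 <= cosh x.
Proof. destruct (Rle_dec 0 x). now apply cosh_lb. rewrite <- cosh_even.
  replace (x^2) with ((-x)^2) by ring. apply cosh_lb; lra. Qed.
Lemma cosh_ub_all x : -1 <= x <= 1 -> cosh x <= 1 + x^2/2 + x^4/12.
Proof. intros H. destruct (Rle_dec 0 x). apply cosh_ub; lra. rewrite <- cosh_even.
  replace (x^2) with ((-x)^2) by ring. replace (x^4) with ((-x)^4) by ring. apply cosh_ub; lra. Qed.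
Lemma cosh_abs x : cosh x = cosh (Rabs x).
Proof. destruct (Rle_dec 0 x). rewrite Rabs_right; lra. rewrite Rabs_left by lra. now rewrite cosh_even. Qed.

Lemma hyp_core a b eps T C sg : 0 < a -> 0 < b -> 0 < eps -> 0 < T ->
  T * (a + b + eps)^2 <= eps / 2 ->
  Rabs (a - b) * T <= C <= (a + b) * T -> 0 < sg < 1 ->
  let A := a * T in let B := b * T in
  let k := (cosh A * cosh B - cosh C) / (sinh A * sinh B) in
  -1 <= k <= 1 /\
  cosh (sg * A) * cosh (sg * B) - sinh (sg * A) * sinh (sg * B) * k <= cosh (sg * (C + eps * T)).
Proof.
  intros ha hb he hT hsmall hC hsg A B k.
  set (s := a + b).
  assert (hs : 0 < s) by (unfold s; lra).
  assert (hsT : s * T <= 1/2).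
  { assert (T * (s + eps) * (s+eps) <= eps/2) by (unfold s in *; nra).
    assert (T * (s+eps) * eps <= T * (s + eps) * (s+eps)) by (apply Rmult_le_compat_l; nra).
    assert (T * (s+eps) <= 1/2).
    { apply Rmult_le_reg_r with eps; nra. }
    nra. }
  assert (hA : 0 < A) by (unfold A; nra).
  assert (hB : 0 < B) by (unfold B; nra).
  assert (hAB : A + B <= 1/2) by (unfold A, B, s in *; nra).
  assert (hu : Rabs (A - B) <= C).
  { unfold A, B. replace (a*T - b*T) with ((a-b)*T) by ring. rewrite Rabs_mult, (Rabs_right T) by lra. lra. }
  assert (hC2 : C <= A + B) by (unfold A, B; lra).
  assert (hCpos : 0 <= C) by (pose proof (Rabs_pos (A-B)); lra).
  assert (hsA : A <= sinh A) by (apply sinh_ge; lra).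
  assert (hsB : B <= sinh B) by (apply sinh_ge; lra).
  assert (hq : 0 < sinh A * sinh B) by nra.
  assert (hkdef : sinh A * sinh B * k = cosh A * cosh B - cosh C).
  { unfold k. field. lra. }
  assert (hD : 0 <= cosh C - cosh (A - B)).
  { rewrite (cosh_abs (A - B)). pose proof (cosh_mono (Rabs (A - B)) C ltac:(pose proof (Rabs_pos (A-B)); lra)). lra. }
  assert (hk1 : k <= 1).
  { rewrite cosh_minus in hD. apply Rmult_le_reg_l with (sinh A * sinh B); nra. }
  assert (hk2 : -1 <= k).
  { pose proof (cosh_mono C (A + B) ltac:(lra)).
    rewrite cosh_plus in H. apply Rmult_le_reg_l with (sinh A * sinh B); nra. }
  split; [lra|].
  set (x := sg * A). set (y := sg * B). set (u := A - B). set (dl := eps * T).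
  set (Dl := cosh C - cosh u).
  assert (hx : 0 < x <= A) by (unfold x; nra).
  assert (hy : 0 < y <= B) by (unfold y; nra).
  assert (hW : cosh x * cosh y - sinh x * sinh y * k = cosh (x - y) + sinh x * sinh y * (1 - k)).
  { rewrite cosh_minus. ring. }
  rewrite hW.
  assert (hxy : x - y = sg * u) by (unfold x, y, u; ring).
  assert (hsx : 0 <= sinh x <= x * (1 + A^2/3)).
  { split. apply sinh_nonneg; lra. apply Rle_trans with (x + x^3/3). apply sinh_ub; lra.
    assert (x^2 <= A^2) by (apply pow_incr; lra). nra. }
  assert (hsy : 0 <= sinh y <= y * (1 + B^2/3)).
  { split. apply sinh_nonneg; lra. apply Rle_trans with (y + y^3/3). apply sinh_ub; lra.
    assert (y^2 <= B^2) by (apply pow_incr; lra). nra. }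
  set (M := (1 + A^2/3) * (1 + B^2/3)).
  assert (hM0 : 1 <= M) by (unfold M; nra).
  assert (hp : sinh x * sinh y <= sg^2 * M * (A * B)).
  { apply Rle_trans with (x * (1 + A^2/3) * (y * (1 + B^2/3))). apply Rmult_le_compat; lra.
    unfold x, y, M. nra. }
  assert (h1k : 0 <= 1 - k) by lra.
  assert (hpk : sinh x * sinh y * (1 - k) <= sg^2 * M * Dl).
  { apply Rle_trans with (sg^2 * M * (A * B) * (1-k)). apply Rmult_le_compat_r; lra.
    assert (A * B * (1 - k) <= Dl).
    { unfold Dl, u. rewrite cosh_minus. apply Rle_trans with (sinh A * sinh B * (1 - k)).
      apply Rmult_le_compat_r; nra. nra. }
    assert (0 <= sg^2 * M) by (apply Rmult_le_pos; [apply pow2_ge_0|lra]).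
    replace (sg ^ 2 * M * (A * B) * (1 - k)) with (sg^2 * M * (A * B * (1 - k))) by ring.
    apply Rmult_le_compat_l; lra. }
  assert (hu' : -1/2 <= u <= 1/2) by (unfold u; lra).
  assert (hDl : Dl <= (C^2 - u^2)/2 + C^4/12).
  { unfold Dl. pose proof (cosh_ub_all C ltac:(lra)). pose proof (cosh_lb_all u). lra. }
  assert (hcxy : cosh (x - y) <= 1 + sg^2 * u^2/2 + sg^4 * u^4/12).
  { rewrite hxy. assert (H1 : -1 <= sg * u <= 1) by (clear - hu' hsg; split; nra).
    pose proof (cosh_ub_all (sg * u) H1).
    replace ((sg*u)^2) with (sg^2*u^2) in H by ring. replace ((sg*u)^4) with (sg^4*u^4) in H by ring. lra. }
  assert (hclb : 1 + sg^2 * (C + dl)^2/2 <= cosh (sg * (C + dl))).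
  { pose proof (cosh_lb_all (sg * (C + dl))). replace ((sg*(C+dl))^2) with (sg^2*(C+dl)^2) in H by ring. lra. }
  fold dl.
  assert (hsg1 : 0 <= sg^2 <= 1) by (split; [apply pow2_ge_0| assert (sg^2 <= 1^2) by (apply pow_incr; lra); rewrite pow1 in *; lra]).
  assert (hsg2 : sg^4 <= sg^2) by (replace (sg^4) with (sg^2*sg^2) by ring; assert (sg^2*sg^2 <= sg^2*1) by (apply Rmult_le_compat_l; lra); lra).
  assert (hM1 : M - 1 <= s^2 * T^2).
  { unfold M. assert (hABs : A + B = s * T) by (unfold A, B, s; ring). assert (A^2 + B^2 <= s^2*T^2) by (replace (s^2*T^2) with ((A+B)^2) by (rewrite hABs; ring); clear - hA hB; nra).
    assert (A^2 * B^2 <= s^2*T^2 * (1/4)).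
    { assert (A^2 <= 1/4) by (replace (1/4) with ((1/2)^2) by field; apply pow_incr; lra).
      assert (B^2 <= s^2*T^2) by (pose proof (pow2_ge_0 A); lra).
      rewrite Rmult_comm. apply Rmult_le_compat; try apply pow2_ge_0; lra. }
    nra. }
  assert (hM2 : M <= 2) by (assert (s^2*T^2 <= 1/4) by (replace (s^2*T^2) with ((s*T)^2) by ring; replace (1/4) with ((1/2)^2) by field; apply pow_incr; split; [apply Rmult_le_pos|]; lra); lra).
  assert (hu2 : u^2 <= C^2).
  { fold u in hu. destruct (Rle_dec 0 u). rewrite Rabs_right in hu by lra. apply pow_incr; lra. rewrite Rabs_left in hu by lra. replace (u^2) with ((-u)^2) by ring. apply pow_incr; lra. }
  assert (hkey : u^2 + u^4/6 + M * (C^2 - u^2) + M * C^4/6 <= (C + dl)^2).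
  { assert (hdl : dl = eps * T) by reflexivity.
    assert (hCs : C <= s * T) by (unfold s; lra).
    assert (hu4 : u^4 <= s^4 * T^4).
    { replace (u^4) with ((u^2)^2) by ring. replace (s^4 * T^4) with ((s^2*T^2)^2) by ring.
      apply pow_incr. split. apply pow2_ge_0. replace (s^2*T^2) with ((s*T)^2) by ring. apply Rle_trans with (C^2); [exact hu2| apply pow_incr; lra]. }
    assert (hC4 : C^4 <= s^4 * T^4).
    { replace (s^4 * T^4) with ((s*T)^4) by ring. apply pow_incr. lra. }
    assert (hs4 : s^4 <= (s+eps)^4) by (apply pow_incr; lra).
    assert (hM1' : (M - 1) * (C^2 - u^2) <= s^2*T^2 * (s^2 * T^2)).
    { assert (C^2 <= s^2*T^2) by (replace (s^2*T^2) with ((s*T)^2) by ring; apply pow_incr; lra).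
      apply Rmult_le_compat; try lra. pose proof (pow2_ge_0 u); lra. }
    assert (hTe : T * (s+eps)^2 <= eps/2) by (unfold s; lra).
    assert (hT2 : T^2 * (s+eps)^4 <= eps^2/4).
    { replace (T^2 * (s+eps)^4) with ((T * (s+eps)^2)^2) by ring.
      replace (eps^2/4) with ((eps/2)^2) by field. apply pow_incr. split; [|lra].
      apply Rmult_le_pos; [lra|apply pow2_ge_0]. }
    assert (hT4 : (s+eps)^4 * T^4 <= eps^2 * T^2 / 4).
    { replace ((s+eps)^4 * T^4) with (T^2 * (T^2 * (s+eps)^4)) by ring.
      replace (eps^2 * T^2 / 4) with (T^2 * (eps^2/4)) by field. apply Rmult_le_compat_l; [apply pow2_ge_0|exact hT2]. }
    assert (hT4' : s^4 * T^4 <= (s+eps)^4 * T^4) by (apply Rmult_le_compat_r; [apply pow_le; lra|exact hs4]).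
    assert (hdl0 : 0 <= dl) by (unfold dl; apply Rmult_le_pos; lra).
    assert (hCdl : C^2 + dl^2 <= (C+dl)^2) by (assert (0 <= C*dl) by (apply Rmult_le_pos; lra); replace ((C+dl)^2) with (C^2+dl^2+2*(C*dl)) by ring; lra).
    assert (hdl2 : dl^2 = eps^2 * T^2) by (unfold dl; ring).
    assert (hMu : M * C^4 <= 2 * C^4) by (apply Rmult_le_compat_r; [apply pow_le; lra|exact hM2]).
    assert (hexp : u^2 + M * (C^2 - u^2) = C^2 + (M-1)*(C^2-u^2)) by ring.
    replace (u ^ 2 + u ^ 4 / 6 + M * (C ^ 2 - u ^ 2) + M * C ^ 4 / 6) with
      (C^2 + (M-1)*(C^2-u^2) + u^4/6 + M * C^4/6) by ring.
    replace (s^2*T^2*(s^2*T^2)) with (s^4*T^4) in hM1' by ring. rewrite hdl2 in hCdl. assert (0 <= eps^2*T^2) by (apply Rmult_le_pos; apply pow2_ge_0). lra. }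
  assert (hu40 : 0 <= u^4) by (replace (u^4) with ((u^2)^2) by ring; apply pow2_ge_0).
  assert (h4 : sg^4 * u^4 <= sg^2 * u^4) by (apply Rmult_le_compat_r; lra).
  assert (h5 : sg^2 * M * Dl <= sg^2 * M * ((C^2 - u^2)/2 + C^4/12)) by (apply Rmult_le_compat_l; [apply Rmult_le_pos; lra|exact hDl]).
  assert (h6 : sg^2 * (u^2 + u^4/6 + M * (C^2 - u^2) + M * C^4/6) <= sg^2 * (C+dl)^2) by (apply Rmult_le_compat_l; lra).
  assert (e1 : sg ^ 2 * M * ((C ^ 2 - u ^ 2) / 2 + C ^ 4 / 12) = sg^2 * (M * (C^2 - u^2))/2 + sg^2 * (M * C^4/6)/2) by field.
  assert (e2 : sg ^ 2 * (u ^ 2 + u^4/6 + M * (C ^ 2 - u ^ 2) + M * C ^ 4 / 6) = sg^2 * u^2 + sg^2 * u^4/6 + sg^2 * (M * (C^2 - u^2)) + sg^2 * (M * C^4/6)) by field.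
  rewrite e1 in h5. rewrite e2 in h6.
  lra.
Qed.


Lemma sqrt_sq_eq S v : 0 <= v -> S = v^2 -> sqrt S = v.
Proof. intros. subst. now apply sqrt_pow2. Qed.

Section Sph.
Variable kappa : R.
Hypothesis hk : 0 < kappa.
Let sk := sqrt kappa.
Let rho := / sk.
Lemma sk_pos : 0 < sk. Proof. apply sqrt_lt_R0; lra. Qed.
Lemma rho2 : kappa * (rho * rho) = 1.
Proof. unfold rho, sk. pose proof sk_pos. rewrite <- Rinv_mult, sqrt_sqrt by lra. field. lra. Qed.

Lemma md_sph u1 u2 u3 w1 w2 w3 :
  model_dist kappa (rho*u1, rho*u2, rho*u3) (rho*w1, rho*w2, rho*w3) = rho * acos (u1*w1+u2*w2+u3*w3).
Proof. unfold model_dist. destruct (Req_EM_T kappa 0); [lra|]. destruct (Rlt_dec 0 kappa); [|lra].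
  fold sk. fold rho. f_equal. f_equal. pose proof rho2.
  replace (kappa * (rho * u1 * (rho * w1) + rho * u2 * (rho * w2) + rho * u3 * (rho * w3)))
    with (kappa * (rho * rho) * (u1*w1+u2*w2+u3*w3)) by ring. rewrite H. ring. Qed.

Lemma mp_sph u1 u2 u3 : u1^2 + u2^2 + u3^2 = 1 -> model_pt kappa (rho*u1, rho*u2, rho*u3).
Proof. intros H. unfold model_pt. right; left. split; auto. pose proof rho2.
  replace ((rho * u1) ^ 2 + (rho * u2) ^ 2 + (rho * u3) ^ 2) with ((rho*rho) * (u1^2+u2^2+u3^2)) by ring.
  rewrite H. apply Rmult_eq_reg_l with kappa; [|lra]. field_simplify; lra. Qed.
End Sph.



Lemma acos_le W th : -1 <= W <= 1 -> 0 <= th <= PI -> cos th <= W -> acos W <= th.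
Proof. intros HW Hth Hc. destruct (Rle_dec (acos W) th); auto.
  pose proof (acos_bound W). pose proof (cos_decreasing_1 th (acos W)). 
  rewrite cos_acos in H0 by lra. exfalso. assert (W < cos th) by (apply H0; lra). lra. Qed.

Definition model_good kappa a b eps : Prop := exists tau, 0 < tau /\ forall t c sg,
  0 < t < tau -> Rabs (a - b) * t <= c <= (a + b) * t -> 0 < sg < 1 ->
  exists P Q Rr X Z, model_pt kappa P /\ model_pt kappa Q /\ model_pt kappa Rr /\
   model_dist kappa P Q = a * t /\ model_dist kappa Q Rr = c /\ model_dist kappa Rr P = b * t /\
   on_model_seg kappa P Q sg X /\ on_model_seg kappa Rr P (1 - sg) Z /\
   model_dist kappa X Z <= sg * (c + eps * t).

Lemma model_good_sph kappa a b eps : 0 < kappa -> 0 < a -> 0 < b -> 0 < eps -> model_good kappa a b eps.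
Proof.
  intros hk ha hb he.
  pose proof (sk_pos kappa hk) as hsk. set (sk := sqrt kappa) in *.
  set (rho := / sk).
  assert (hrs : forall x, rho * (x * sk) = x) by (intros; unfold rho; field; lra).
  exists (eps / (2 * (a + b + eps)^2) / sk). split.
  { apply Rdiv_lt_0_compat; [|lra]. apply Rdiv_lt_0_compat; [lra|]. nra. }
  intros t c sg ht hc hsg.
  set (T := t * sk). set (C := c * sk).
  assert (hT : 0 < T) by (unfold T; nra).
  assert (hTs : T * (a + b + eps)^2 <= eps/2).
  { unfold T. destruct ht as [ht1 ht2].
    apply Rmult_lt_compat_r with (r := sk) in ht2; [|lra].
    replace (eps / (2 * (a + b + eps) ^ 2) / sk * sk) with (eps / (2 * (a + b + eps) ^ 2)) in ht2 by (field; nra).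
    assert (0 < (a+b+eps)^2) by nra.
    apply Rmult_lt_compat_r with (r := (a+b+eps)^2) in ht2; [|lra].
    replace (eps / (2 * (a + b + eps) ^ 2) * (a + b + eps) ^ 2) with (eps/2) in ht2 by (field; nra). lra. }
  assert (hC : Rabs (a - b) * T <= C <= (a + b) * T).
  { unfold T, C. split; rewrite <- Rmult_assoc; apply Rmult_le_compat_r; lra. }
  pose proof (smallT a b eps T ha hb he hT hTs) as hsm.
  destruct (sphere_core a b eps T C sg ha hb he hT hTs hC hsg) as [hk1 hmain].
  set (A := a * T) in *. set (B := b * T) in *.
  set (k := (cos C - cos A * cos B) / (sin A * sin B)) in *.
  set (q := sqrt (1 - k^2)).
  pose proof PI2_1 as HPI.
  assert (hA : 0 < A <= 1/2) by (unfold A; split; nra).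
  assert (hB : 0 < B <= 1/2) by (unfold B; split; nra).
  assert (hCp : 0 <= C) by (pose proof (Rabs_pos (a-b)); nra).
  assert (hq2 : k^2 + q^2 = 1) by (unfold q; rewrite pow2_sqrt; nra).
  assert (hsA : 0 < sin A) by (apply sin_gt_0; lra).
  assert (hsB : 0 < sin B) by (apply sin_gt_0; lra).
  assert (hkdef : sin A * sin B * k = cos C - cos A * cos B) by (unfold k; field; nra).
  assert (hsc : forall z, sin z ^ 2 + cos z ^ 2 = 1) by (intros; pose proof (sin2_cos2 z); unfold Rsqr in H; lra).
  set (x := sg * A). set (y := sg * B).
  exists (rho*0, rho*0, rho*1), (rho * sin A, rho*0, rho * cos A),
    (rho * (sin B * k), rho * (sin B * q), rho * cos B),
    (rho * sin x, rho*0, rho * cos x),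
    (rho * (sin y * k), rho * (sin y * q), rho * cos y).
  assert (hxA : 0 < x < A) by (unfold x; nra).
  assert (hyB : 0 < y < B) by (unfold y; nra).
  repeat split.
  - apply mp_sph; auto. ring.
  - apply mp_sph; auto. rewrite <- (hsc A). ring.
  - apply mp_sph; auto. rewrite <- (hsc B). replace ((sin B * k)^2 + (sin B * q)^2) with (sin B ^2 * (k^2 + q^2)) by ring. rewrite hq2. ring.
  - rewrite md_sph by auto. fold sk rho.
    replace (0 * sin A + 0 * 0 + 1 * cos A) with (cos A) by ring. rewrite acos_cos by lra. unfold A, B, T, rho; field; lra.
  - rewrite md_sph by auto. fold sk rho.
    replace (sin A * (sin B * k) + 0 * (sin B * q) + cos A * cos B) with (cos C) by nra.
    rewrite acos_cos by (split; [lra|]; assert (C <= 1) by (unfold T in *; nra); lra). unfold C, rho; field; lra.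
  - rewrite md_sph by auto. fold sk rho.
    replace (sin B * k * 0 + sin B * q * 0 + cos B * 1) with (cos B) by ring. rewrite acos_cos by lra. unfold B, T. rewrite <- Rmult_assoc. unfold C, rho; field; lra.
  all: try (rewrite ?md_sph by auto; fold sk rho).
  - apply mp_sph; auto. rewrite <- (hsc x). ring.
  - replace (0 * sin x + 0 * 0 + 1 * cos x) with (cos x) by ring.
    replace (0 * sin A + 0 * 0 + 1 * cos A) with (cos A) by ring.
    rewrite !acos_cos by lra. unfold x. ring.
  - replace (sin x * sin A + 0 * 0 + cos x * cos A) with (cos (A - x)) by (rewrite cos_minus; ring).
    replace (0 * sin A + 0 * 0 + 1 * cos A) with (cos A) by ring.
    rewrite !acos_cos by lra. unfold x. ring.
  - apply mp_sph; auto. rewrite <- (hsc y). replace ((sin y * k)^2 + (sin y * q)^2) with (sin y ^2 * (k^2 + q^2)) by ring. rewrite hq2. ring.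
  - replace (sin B * k * (sin y * k) + sin B * q * (sin y * q) + cos B * cos y) with (cos (B - y))
      by (rewrite cos_minus; replace (sin B * k * (sin y * k) + sin B * q * (sin y * q)) with (sin B * sin y * (k^2 + q^2)) by ring; rewrite hq2; ring).
    replace (sin B * k * 0 + sin B * q * 0 + cos B * 1) with (cos B) by ring.
    rewrite !acos_cos by lra. unfold y. ring.
  - replace (sin y * k * 0 + sin y * q * 0 + cos y * 1) with (cos y) by ring.
    replace (sin B * k * 0 + sin B * q * 0 + cos B * 1) with (cos B) by ring.
    rewrite !acos_cos by lra. unfold y. ring.
  - replace (sin x * (sin y * k) + 0 * (sin y * q) + cos x * cos y) with (cos x * cos y + sin x * sin y * k) by ring.
    assert (hth : 0 <= sg * (C + eps * T) <= PI).
    { assert (C + eps * T <= 1). { destruct hC as [_ hC2]. clearbody T C A B. lra. } assert (0 <= C + eps * T) by nra. split. apply Rmult_le_pos; lra. assert (sg * (C + eps*T) <= C + eps*T) by nra. lra. }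
    assert (hW1 : cos x * cos y + sin x * sin y * k <= 1).
    { assert (0 <= sin x) by (left; apply sin_gt_0; lra). assert (0 <= sin y) by (left; apply sin_gt_0; lra).
      assert (sin x * sin y * k <= sin x * sin y) by (pose proof (Rmult_le_pos _ _ H H0); nra).
      pose proof (COS_bound (x - y)). rewrite cos_minus in H2. lra. }
    assert (hW2 : -1 <= cos x * cos y + sin x * sin y * k) by (pose proof (COS_bound (sg * (C + eps * T))); unfold x, y; lra).
    pose proof (acos_le _ _ (conj hW2 hW1) hth hmain) as hle.
    apply Rle_trans with (rho * (sg * (C + eps * T))).
    apply Rmult_le_compat_l; [unfold rho; left; apply Rinv_0_lt_compat; lra | exact hle].
    right. unfold C, T, rho. field. lra.
Qed.


Lemma arcosh_cosh x : 0 <= x -> arcosh (cosh x) = x.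
Proof. intros H. unfold arcosh.
  assert (cosh x ^ 2 - 1 = sinh x ^ 2) by (pose proof (cosh_sinh x); lra).
  rewrite H0, sqrt_pow2 by (apply sinh_nonneg; lra).
  replace (cosh x + sinh x) with (exp x) by (unfold cosh, sinh; field). apply ln_exp. Qed.

Lemma arcosh_le W th : 1 <= W <= cosh th -> 0 <= th -> arcosh W <= th.
Proof. intros HW Hth. rewrite <- (arcosh_cosh th Hth). unfold arcosh.
  assert (W + sqrt (W^2 - 1) <= cosh th + sqrt (cosh th ^2 - 1)).
  { assert (sqrt (W^2-1) <= sqrt (cosh th ^2 - 1)) by (apply sqrt_le_1_alt; nra). lra. }
  assert (0 < W + sqrt (W^2 - 1)) by (pose proof (sqrt_pos (W^2-1)); lra).
  destruct H; [left; apply ln_increasing; auto | rewrite H; lra]. Qed.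

Section Hyp.
Variable kappa : R.
Hypothesis hk : kappa < 0.
Let sk := sqrt (- kappa).
Let rho := / sk.
Lemma skh_pos : 0 < sk. Proof. apply sqrt_lt_R0; lra. Qed.
Lemma rhoh2 : - kappa * (rho * rho) = 1.
Proof. unfold rho, sk. pose proof skh_pos. rewrite <- Rinv_mult, sqrt_sqrt by lra. field. lra. Qed.

Lemma md_hyp u1 u2 u3 w1 w2 w3 :
  model_dist kappa (rho*u1, rho*u2, rho*u3) (rho*w1, rho*w2, rho*w3) = rho * arcosh (u3*w3 - u1*w1 - u2*w2).
Proof. unfold model_dist. destruct (Req_EM_T kappa 0); [lra|]. destruct (Rlt_dec 0 kappa); [lra|].
  fold sk. fold rho. f_equal. f_equal. pose proof rhoh2.
  replace (- kappa * (rho * u3 * (rho * w3) - rho * u1 * (rho * w1) - rho * u2 * (rho * w2)))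
    with (- kappa * (rho * rho) * (u3*w3 - u1*w1 - u2*w2)) by ring. rewrite H. ring. Qed.

Lemma mp_hyp u1 u2 u3 : u1^2 + u2^2 - u3^2 = -1 -> 0 < u3 -> model_pt kappa (rho*u1, rho*u2, rho*u3).
Proof. intros H H3. unfold model_pt. right; right. split; auto. pose proof rhoh2.
  replace ((rho * u1) ^ 2 + (rho * u2) ^ 2 - (rho * u3) ^ 2) with ((rho*rho) * (u1^2+u2^2-u3^2)) by ring.
  rewrite H. split. apply Rmult_eq_reg_l with kappa; [|lra]. field_simplify; lra.
  apply Rmult_lt_0_compat; auto. unfold rho. apply Rinv_0_lt_compat, skh_pos. Qed.
End Hyp.

Lemma model_good_hyp kappa a b eps : kappa < 0 -> 0 < a -> 0 < b -> 0 < eps -> model_good kappa a b eps.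
Proof.
  intros hk ha hb he.
  pose proof (skh_pos kappa hk) as hsk. set (sk := sqrt (- kappa)) in *.
  set (rho := / sk).
  exists (eps / (2 * (a + b + eps)^2) / sk). split.
  { apply Rdiv_lt_0_compat; [|lra]. apply Rdiv_lt_0_compat; [lra|]. nra. }
  intros t c sg ht hc hsg.
  set (T := t * sk). set (C := c * sk).
  assert (hT : 0 < T) by (unfold T; nra).
  assert (hTs : T * (a + b + eps)^2 <= eps/2).
  { unfold T. destruct ht as [ht1 ht2].
    apply Rmult_lt_compat_r with (r := sk) in ht2; [|lra].
    replace (eps / (2 * (a + b + eps) ^ 2) / sk * sk) with (eps / (2 * (a + b + eps) ^ 2)) in ht2 by (field; nra).
    assert (0 < (a+b+eps)^2) by nra.
    apply Rmult_lt_compat_r with (r := (a+b+eps)^2) in ht2; [|lra].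
    replace (eps / (2 * (a + b + eps) ^ 2) * (a + b + eps) ^ 2) with (eps/2) in ht2 by (field; nra). lra. }
  assert (hC : Rabs (a - b) * T <= C <= (a + b) * T).
  { unfold T, C. split; rewrite <- Rmult_assoc; apply Rmult_le_compat_r; lra. }
  pose proof (smallT a b eps T ha hb he hT hTs) as hsm.
  destruct (hyp_core a b eps T C sg ha hb he hT hTs hC hsg) as [hk1 hmain].
  set (A := a * T) in *. set (B := b * T) in *.
  set (k := (cosh A * cosh B - cosh C) / (sinh A * sinh B)) in *.
  set (q := sqrt (1 - k^2)).
  assert (hA : 0 < A) by (unfold A; nra).
  assert (hB : 0 < B) by (unfold B; nra).
  assert (hCp : 0 <= C) by (pose proof (Rabs_pos (a-b)); nra).
  assert (hq2 : k^2 + q^2 = 1) by (unfold q; rewrite pow2_sqrt; nra).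
  assert (hsA : A <= sinh A) by (apply sinh_ge; lra).
  assert (hsB : B <= sinh B) by (apply sinh_ge; lra).
  assert (hkdef : sinh A * sinh B * k = cosh A * cosh B - cosh C) by (unfold k; field; nra).
  assert (hsc : forall z, sinh z ^ 2 - cosh z ^ 2 = -1) by (intros; pose proof (cosh_sinh z); lra).
  assert (hcp : forall z, 0 < cosh z) by (intros; unfold cosh; pose proof (exp_pos z); pose proof (exp_pos (-z)); lra).
  set (x := sg * A). set (y := sg * B).
  exists (rho*0, rho*0, rho*1), (rho * sinh A, rho*0, rho * cosh A),
    (rho * (sinh B * k), rho * (sinh B * q), rho * cosh B),
    (rho * sinh x, rho*0, rho * cosh x),
    (rho * (sinh y * k), rho * (sinh y * q), rho * cosh y).
  assert (hxA : 0 < x < A) by (unfold x; nra).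
  assert (hyB : 0 < y < B) by (unfold y; nra).
  repeat split.
  all: try (rewrite ?md_hyp by auto; fold sk rho).
  all: try (apply mp_hyp; auto).
  - ring.
  - lra.
  - rewrite <- (hsc A). ring.
  - rewrite <- (hsc B). replace ((sinh B * k)^2 + (sinh B * q)^2) with (sinh B ^2 * (k^2 + q^2)) by ring. rewrite hq2. ring.
  - replace (1 * cosh A - 0 * sinh A - 0 * 0) with (cosh A) by ring. rewrite arcosh_cosh by lra. unfold A, T, rho; field; lra.
  - replace (cosh A * cosh B - sinh A * (sinh B * k) - 0 * (sinh B * q)) with (cosh C) by nra.
    rewrite arcosh_cosh by lra. unfold C, rho; field; lra.
  - replace (cosh B * 1 - sinh B * k * 0 - sinh B * q * 0) with (cosh B) by ring. rewrite arcosh_cosh by lra. unfold B, T, rho; field; lra.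
  - rewrite <- (hsc x). ring.
  - replace (1 * cosh x - 0 * sinh x - 0 * 0) with (cosh x) by ring.
    replace (1 * cosh A - 0 * sinh A - 0 * 0) with (cosh A) by ring.
    rewrite !arcosh_cosh by lra. unfold x. ring.
  - replace (cosh x * cosh A - sinh x * sinh A - 0 * 0) with (cosh (A - x)) by (rewrite cosh_minus; ring).
    replace (1 * cosh A - 0 * sinh A - 0 * 0) with (cosh A) by ring.
    rewrite !arcosh_cosh by lra. unfold x. ring.
  - rewrite <- (hsc y). replace ((sinh y * k)^2 + (sinh y * q)^2) with (sinh y ^2 * (k^2 + q^2)) by ring. rewrite hq2. ring.
  - replace (cosh B * cosh y - sinh B * k * (sinh y * k) - sinh B * q * (sinh y * q)) with (cosh (B - y))
      by (rewrite cosh_minus; replace (sinh B * sinh y) with (sinh B * sinh y * (k^2+q^2)) by (rewrite hq2; ring); ring).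
    replace (cosh B * 1 - sinh B * k * 0 - sinh B * q * 0) with (cosh B) by ring.
    rewrite !arcosh_cosh by lra. unfold y. ring.
  - replace (cosh y * 1 - sinh y * k * 0 - sinh y * q * 0) with (cosh y) by ring.
    replace (cosh B * 1 - sinh B * k * 0 - sinh B * q * 0) with (cosh B) by ring.
    rewrite !arcosh_cosh by lra. unfold y. ring.
  - replace (cosh x * cosh y - sinh x * (sinh y * k) - 0 * (sinh y * q)) with (cosh x * cosh y - sinh x * sinh y * k) by ring.
    assert (hth : 0 <= sg * (C + eps * T)).
    { assert (0 <= C + eps * T) by nra. apply Rmult_le_pos; lra. }
    assert (hW1 : 1 <= cosh x * cosh y - sinh x * sinh y * k).
    { assert (0 <= sinh x) by (apply sinh_nonneg; lra). assert (0 <= sinh y) by (apply sinh_nonneg; lra).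
      assert (sinh x * sinh y * k <= sinh x * sinh y) by (pose proof (Rmult_le_pos _ _ H H0); nra).
      pose proof (cosh_lb_all (x - y)). rewrite cosh_minus in H2. pose proof (pow2_ge_0 (x - y)). lra. }
    pose proof (arcosh_le _ _ (conj hW1 hmain) hth) as hle.
    apply Rle_trans with (rho * (sg * (C + eps * T))).
    apply Rmult_le_compat_l; [unfold rho; left; apply Rinv_0_lt_compat; lra | exact hle].
    right. unfold C, T, rho. field. lra.
Qed.


Lemma md_flat x1 x2 x3 y1 y2 y3 : model_dist 0 (x1,x2,x3) (y1,y2,y3) = sqrt ((x1-y1)^2 + (x2-y2)^2 + (x3-y3)^2).
Proof. unfold model_dist. destruct (Req_EM_T 0 0); [reflexivity|lra]. Qed.

Lemma model_good_flat a b eps : 0 < a -> 0 < b -> 0 < eps -> model_good 0 a b eps.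
Proof.
  intros ha hb he. exists 1. split; [lra|]. intros t c sg ht hc hsg.
  set (al := a * t). set (be := b * t).
  assert (hal : 0 < al) by (unfold al; nra). assert (hbe : 0 < be) by (unfold be; nra).
  assert (hc1 : (al - be)^2 <= c^2).
  { assert (Rabs (al - be) <= c) by (unfold al, be; replace (a*t-b*t) with ((a-b)*t) by ring;
      rewrite Rabs_mult, (Rabs_right t) by lra; lra).
    destruct (Rle_dec 0 (al - be)). rewrite Rabs_right in H by lra. nra. rewrite Rabs_left in H by lra. nra. }
  assert (hc2 : c <= al + be) by (unfold al, be; lra).
  assert (hc0 : 0 <= c) by (pose proof (Rabs_pos (a - b)); nra).
  set (p := (al^2 + be^2 - c^2) / (2 * al)).
  assert (hp : p^2 <= be^2).
  { assert (hpd : 2 * al * p = al^2 + be^2 - c^2) by (unfold p; field; lra).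
    assert ((2*al*p)^2 <= (2*al*be)^2).
    { rewrite hpd. assert (c^2 <= (al+be)^2) by nra.
      replace ((2*al*be)^2) with ((al^2+be^2 - c^2)^2 + ((al+be)^2 - c^2)*(c^2 - (al-be)^2)) by ring.
      assert (0 <= ((al+be)^2 - c^2)*(c^2 - (al-be)^2)) by (apply Rmult_le_pos; lra). lra. }
    apply Rmult_le_reg_l with (4 * al^2). nra.
    replace (4 * al^2 * p^2) with ((2*al*p)^2) by ring. replace (4 * al^2 * be^2) with ((2*al*be)^2) by ring. lra. }
  set (q := sqrt (be^2 - p^2)).
  assert (hq : q^2 = be^2 - p^2) by (unfold q; apply pow2_sqrt; lra).
  assert (hpq : (al - p)^2 + q^2 = c^2).
  { rewrite hq. assert (hpd : 2 * al * p = al^2 + be^2 - c^2) by (unfold p; field; lra). nra. }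
  exists (0,0,0), (al,0,0), (p,q,0), (sg*al,0,0), (sg*p,sg*q,0).
  assert (e1 : sqrt ((0 - al) ^ 2 + (0 - 0) ^ 2 + (0 - 0) ^ 2) = al) by (apply sqrt_sq_eq; [lra|ring]).
  assert (e3 : sqrt ((p - 0) ^ 2 + (q - 0) ^ 2 + (0 - 0) ^ 2) = be) by (apply sqrt_sq_eq; [lra|nra]).
  unfold model_pt. repeat split; try (left; split; reflexivity).
  all: rewrite ?md_flat, ?e1, ?e3.
  - reflexivity.
  - apply sqrt_sq_eq; [lra| rewrite <- hpq; ring].
  - reflexivity.
  - apply sqrt_sq_eq; [nra| ring].
  - apply sqrt_sq_eq; [nra| ring].
  - apply sqrt_sq_eq; [nra| replace ((p - sg * p) ^ 2 + (q - sg * q) ^ 2 + (0 - 0) ^ 2) with ((1-sg)^2 * (p^2+q^2)) by ring; nra].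
  - apply sqrt_sq_eq; [nra| replace ((sg * p - 0) ^ 2 + (sg * q - 0) ^ 2 + (0 - 0) ^ 2) with (sg^2 * (p^2+q^2)) by ring; nra].
  - apply Rle_trans with (sg * c); [right| apply Rmult_le_compat_l; [lra| assert (0 < eps * t) by nra; lra]]. apply sqrt_sq_eq. nra.
    replace ((sg * al - sg * p) ^ 2 + (0 - sg * q) ^ 2 + (0 - 0) ^ 2) with (sg^2 * ((al - p)^2 + q^2)) by ring.
    rewrite hpq. ring.
Qed.



Lemma right_lim_unique f l1 l2 : right_lim_is f l1 -> right_lim_is f l2 -> l1 = l2.
Proof. intros H1 H2. destruct (Req_dec l1 l2) as [|Hne]; auto. exfalso.
  set (e := Rabs (l1 - l2) / 2). assert (he : 0 < e) by (unfold e; pose proof (Rabs_pos_lt _ (Rminus_eq_contra _ _ Hne)); lra).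
  destruct (H1 e he) as [d1 [hd1 H1']]. destruct (H2 e he) as [d2 [hd2 H2']].
  set (t := Rmin d1 d2 / 2).
  assert (ht1 : 0 < t < d1) by (unfold t; pose proof (Rmin_l d1 d2); pose proof (Rmin_glb_lt d1 d2 0 hd1 hd2); lra).
  assert (ht2 : 0 < t < d2) by (unfold t; pose proof (Rmin_r d1 d2); pose proof (Rmin_glb_lt d1 d2 0 hd1 hd2); lra).
  specialize (H1' t ht1). specialize (H2' t ht2).
  pose proof (Rabs_triang (l1 - f t) (f t - l2)). replace (l1 - f t + (f t - l2)) with (l1 - l2) in H by ring.
  rewrite <- Rabs_Ropp in H1'. replace (- (f t - l1)) with (l1 - f t) in H1' by ring. unfold e in *. lra.
Qed.

Lemma right_lim0_eq f l : right_lim_is f l -> right_lim0 f = l.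
Proof. intros H. unfold right_lim0. apply (right_lim_unique f).
  apply (epsilon_spec (inhabits 0) (right_lim_is f)). exists l; auto. auto. Qed.

Lemma right_lim_le f g l1 l2 delta : 0 < delta -> (forall t, 0 < t < delta -> f t <= g t) ->
  right_lim_is f l1 -> right_lim_is g l2 -> l1 <= l2.
Proof. intros hd Hfg H1 H2. destruct (Rle_dec l1 l2) as [|Hn]; auto. exfalso.
  set (e := (l1 - l2) / 2). assert (he : 0 < e) by (unfold e; lra).
  destruct (H1 e he) as [d1 [hd1 H1']]. destruct (H2 e he) as [d2 [hd2 H2']].
  assert (hm : 0 < Rmin delta (Rmin d1 d2)) by (repeat apply Rmin_glb_lt; auto).
  pose proof (Rmin_l delta (Rmin d1 d2)). pose proof (Rmin_r delta (Rmin d1 d2)).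
  pose proof (Rmin_l d1 d2). pose proof (Rmin_r d1 d2).
  set (t := Rmin delta (Rmin d1 d2) / 2).
  specialize (H1' t ltac:(unfold t; lra)). specialize (H2' t ltac:(unfold t; lra)).
  specialize (Hfg t ltac:(unfold t; lra)).
  apply Rabs_def2 in H1'. apply Rabs_def2 in H2'. unfold e in *. lra.
Qed.

Lemma right_lim_const f L delta : 0 < delta -> (forall t, 0 < t < delta -> f t = L) -> right_lim_is f L.
Proof. intros hd H e he. exists delta. split; auto. intros t ht. rewrite H by auto.
  rewrite Rminus_diag, Rabs_R0. auto. Qed.

Lemma lim_exists (f : R -> R) tau0 B : 0 < tau0 ->
  (forall t, 0 < t < tau0 -> 0 <= f t <= B) ->
  (forall e, 0 < e -> exists tau, 0 < tau /\ forall s t, 0 < s < t -> t < tau -> f s <= f t + e) ->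
  exists L, right_lim_is f L.
Proof.
  intros h0 hB hmono.
  set (S := fun u => exists tau, 0 < tau /\ forall t, 0 < t < tau -> f t <= u).
  set (LB := fun l => forall u, S u -> l <= u).
  assert (hBS : S B) by (exists tau0; split; auto; intros; apply hB; auto).
  assert (hLB0 : LB 0).
  { intros u [tau [ht Hu]]. set (t := Rmin tau tau0 / 2).
    assert (0 < Rmin tau tau0) by (apply Rmin_glb_lt; auto).
    pose proof (Rmin_l tau tau0). pose proof (Rmin_r tau tau0).
    specialize (Hu t ltac:(unfold t; lra)). specialize (hB t ltac:(unfold t; lra)). lra. }
  destruct (completeness LB) as [L [HL1 HL2]].
  { exists B. intros l hl. apply hl, hBS. }
  { exists 0. auto. }
  assert (hLu : forall u, S u -> L <= u).
  { intros u hu. apply HL2. intros l hl. apply hl, hu. }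
  exists L. intros e he.
  assert (hex : exists u, S u /\ u < L + e).
  { apply NNPP. intros Hn. assert (LB (L + e)).
    { intros u hu. destruct (Rle_dec (L + e) u); auto. exfalso. apply Hn. exists u. split; auto. lra. }
    specialize (HL1 _ H). lra. }
  destruct hex as [u [[tu [htu Hu]] hul]].
  destruct (hmono (e/2) ltac:(lra)) as [t1 [ht1 Hm]].
  set (dl := Rmin tu (Rmin t1 tau0)).
  exists dl. split. { unfold dl; repeat apply Rmin_glb_lt; auto. }
  intros t ht.
  assert (t < tu /\ t < t1 /\ t < tau0) as [? [? ?]].
  { unfold dl in ht. pose proof (Rmin_l tu (Rmin t1 tau0)). pose proof (Rmin_r tu (Rmin t1 tau0)).
    pose proof (Rmin_l t1 tau0). pose proof (Rmin_r t1 tau0). lra. }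
  assert (hup : f t < L + e) by (specialize (Hu t ltac:(lra)); lra).
  assert (hlow : L <= f t + e/2).
  { apply hLu. exists t. split; [lra|]. intros s hs. apply Hm; lra. }
  apply Rabs_def1; lra.
Qed.


Lemma model_good_all kappa a b eps : 0 < a -> 0 < b -> 0 < eps -> model_good kappa a b eps.
Proof. intros. destruct (Rtotal_order kappa 0) as [h|[h|h]].
  - apply model_good_hyp; auto.
  - subst. apply model_good_flat; auto.
  - apply model_good_sph; auto. Qed.

Section G.
Variables (Y : Type) (d : Y -> Y -> R) (kappa : R).
Hypothesis Hmet : is_metric d.

Lemma d_refl x : d x x = 0. Proof. destruct Hmet as [H _]. apply H. auto. Qed.
Lemma d_sym x y : d x y = d y x. Proof. destruct Hmet as [_ [H _]]. auto. Qed.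
Lemma d_tri x y z : d x z <= d x y + d y z. Proof. destruct Hmet as [_ [_ H]]. auto. Qed.
Lemma d_nonneg x y : 0 <= d x y.
Proof. pose proof (d_tri x y x). rewrite d_refl, (d_sym y x) in H. lra. Qed.
Lemma d_eq0 x y : d x y = 0 -> x = y. Proof. destruct Hmet as [H _]. apply H. Qed.

Lemma germ_dist y g e c : g 0 = y -> 0 < e -> 0 <= c ->
  (forall s t, 0 <= s < e -> 0 <= t < e -> d (g s) (g t) = c * Rabs (s - t)) ->
  forall t, 0 <= t < e -> d y (g t) = c * t.
Proof. intros h0 he hc H t ht. rewrite <- h0. rewrite H by lra.
  replace (0 - t) with (- t) by ring. rewrite Rabs_Ropp, Rabs_right by lra. ring. Qed.

Hypothesis Hcat : locally_CAT d kappa.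

Lemma germ_lim y ga eta : germ d y ga -> germ d y eta ->
  exists L, right_lim_is (fun t => d (ga t) (eta t) / t) L.
Proof.
  intros [hg0 [e1 [a [he1 [ha Hg]]]]] [he0 [e2 [b [he2 [hb He]]]]].
  pose proof (germ_dist y ga e1 a hg0 he1 ha Hg) as Dg.
  pose proof (germ_dist y eta e2 b he0 he2 hb He) as De.
  assert (hm0 : 0 < Rmin e1 e2) by (apply Rmin_glb_lt; auto).
  pose proof (Rmin_l e1 e2). pose proof (Rmin_r e1 e2).
  destruct (Req_dec a 0) as [ha0|ha0].
  { exists b. apply right_lim_const with (Rmin e1 e2); auto. intros t ht.
    assert (ga t = y). { symmetry. apply d_eq0. rewrite Dg by lra. rewrite ha0. ring. }
    rewrite H1, De by lra. field. lra. }
  destruct (Req_dec b 0) as [hb0|hb0].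
  { exists a. apply right_lim_const with (Rmin e1 e2); auto. intros t ht.
    assert (eta t = y). { symmetry. apply d_eq0. rewrite De by lra. rewrite hb0. ring. }
    rewrite H1, d_sym, Dg by lra. field. lra. }
  assert (hap : 0 < a) by lra. assert (hbp : 0 < b) by lra.
  apply (lim_exists _ (Rmin e1 e2) (a + b)); auto.
  { intros t ht. split. apply Rdiv_le_0_compat; [apply d_nonneg|lra].
    apply Rmult_le_reg_r with t; [lra|]. unfold Rdiv. rewrite Rmult_assoc, Rinv_l, Rmult_1_r by lra.
    pose proof (d_tri (ga t) y (eta t)). rewrite (d_sym (ga t) y), Dg, De in H1 by lra. lra. }
  intros eps heps.
  destruct (Hcat y) as [U [[HU1 HU2] [r [hr HUr]]]].
  destruct (model_good_all kappa a b eps hap hbp heps) as [tm [htm Hm]].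
  set (tk := PI / ((sqrt (Rabs kappa) + 1) * (a + b))).
  assert (htk : 0 < tk).
  { unfold tk. pose proof PI_RGT_0. pose proof (sqrt_pos (Rabs kappa)). apply Rdiv_lt_0_compat; nra. }
  set (tr := r / (a + b)).
  assert (htr : 0 < tr) by (unfold tr; apply Rdiv_lt_0_compat; lra).
  exists (Rmin (Rmin e1 e2) (Rmin tm (Rmin tk tr))).
  split. { repeat apply Rmin_glb_lt; auto. }
  intros s t hs ht.
  pose proof (Rmin_l (Rmin e1 e2) (Rmin tm (Rmin tk tr))). pose proof (Rmin_r (Rmin e1 e2) (Rmin tm (Rmin tk tr))).
  pose proof (Rmin_l tm (Rmin tk tr)). pose proof (Rmin_r tm (Rmin tk tr)).
  pose proof (Rmin_l tk tr). pose proof (Rmin_r tk tr).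
  assert (ht1 : t < e1) by lra. assert (ht2 : t < e2) by lra. assert (htm' : t < tm) by lra.
  assert (htk' : t < tk) by lra. assert (htr' : t < tr) by lra.
  clear H1 H2 H3 H4 H5 H6.
  assert (hrt : (a + b) * t < r).
  { unfold tr in htr'. apply Rmult_lt_compat_l with (r := a + b) in htr'; [|lra].
    replace ((a + b) * (r / (a + b))) with r in htr' by (field; lra). lra. }
  assert (hkt : (a + b) * t < PI / (sqrt (Rabs kappa) + 1)).
  { unfold tk in htk'. pose proof (sqrt_pos (Rabs kappa)).
    apply Rmult_lt_compat_l with (r := a + b) in htk'; [|lra].
    replace ((a + b) * (PI / ((sqrt (Rabs kappa) + 1) * (a + b)))) with (PI / (sqrt (Rabs kappa) + 1)) in htk' by (field; lra). lra. }
  assert (hPI : forall p, p < PI / (sqrt (Rabs kappa) + 1) -> 0 < kappa -> p < PI / sqrt kappa).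
  { intros p hp hk. rewrite Rabs_right in hp by lra. pose proof (sqrt_lt_R0 kappa hk).
    apply Rlt_le_trans with (PI / (sqrt kappa + 1)); auto.
    apply Rmult_le_compat_l. pose proof PI_RGT_0; lra. apply Rinv_le_contravar; lra. }
  set (c := d (ga t) (eta t)).
  assert (hc0 : 0 <= c) by apply d_nonneg.
  assert (hct : Rabs (a - b) * t <= c <= (a + b) * t).
  { pose proof (d_tri (ga t) y (eta t)). pose proof (d_tri y (ga t) (eta t)). pose proof (d_tri y (eta t) (ga t)).
    rewrite (d_sym (ga t) y) in H1. rewrite (d_sym (eta t) (ga t)) in H3. fold c in H1, H2, H3.
    rewrite !Dg, !De in * by lra.
    split; [|lra]. destruct (Rle_dec 0 (a - b)). rewrite Rabs_right by lra. nra. rewrite Rabs_left by lra. nra. }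
  assert (hUg : forall u, 0 <= u <= t -> U (ga u)).
  { intros u hu. apply HUr. rewrite Dg by lra. nra. }
  assert (hUe : forall u, 0 <= u <= t -> U (eta u)).
  { intros u hu. apply HUr. rewrite De by lra. nra. }
  assert (hDk : lt_Dk kappa c).
  { destruct (Rle_dec kappa 0). left; auto. right. apply hPI; lra. }
  destruct (HU1 (ga t) (eta t) (hUg t ltac:(lra)) (hUe t ltac:(lra)) hDk) as [g2 [Hg2 HUg2]].
  set (sg := s / t).
  assert (hsg : 0 < sg < 1).
  { unfold sg. split. apply Rdiv_lt_0_compat; lra. apply Rmult_lt_reg_r with t; [lra|].
    unfold Rdiv. rewrite Rmult_assoc, Rinv_l by lra. lra. }
  destruct (Hm t c sg ltac:(lra) hct hsg) as [P [Q [Rr [X [Z [hP [hQ [hR [hPQ [hQR [hRP [hX [hZ hXZ]]]]]]]]]]]]].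
  set (g1 := fun u => ga (u * t)). set (g3 := fun u => eta ((1 - u) * t)).
  assert (Hg1 : geod d g1 y (ga t)).
  { unfold geod, g1. split. rewrite Rmult_0_l; auto. split. rewrite Rmult_1_l; auto.
    intros u v hu hv. rewrite Hg by nra. rewrite Dg by lra.
    replace (u * t - v * t) with ((u - v) * t) by ring. rewrite Rabs_mult, (Rabs_right t) by lra. ring. }
  assert (Hg3 : geod d g3 (eta t) y).
  { unfold geod, g3. split. rewrite Rminus_0_r, Rmult_1_l; auto. split. rewrite Rminus_diag, Rmult_0_l; auto.
    intros u v hu hv. rewrite He by nra. rewrite d_sym, De by lra.
    replace ((1 - u) * t - (1 - v) * t) with (- ((u - v) * t)) by ring. rewrite Rabs_Ropp, Rabs_mult, (Rabs_right t) by lra. ring. }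
  assert (HU1' : geod_in U g1) by (intros u hu; unfold g1; apply hUg; nra).
  assert (HU3' : geod_in U g3) by (intros u hu; unfold g3; apply hUe; nra).
  assert (hper : lt_2Dk kappa (d y (ga t) + d (ga t) (eta t) + d (eta t) y)).
  { rewrite Dg by lra. rewrite (d_sym (eta t) y), De by lra. fold c.
    destruct (Rle_dec kappa 0). left; auto. right. pose proof (hPI ((a+b)*t) hkt ltac:(lra)). lra. }
  assert (hPQ' : model_dist kappa P Q = d y (ga t)) by (rewrite Dg by lra; auto).
  assert (hRP' : model_dist kappa Rr P = d (eta t) y) by (rewrite d_sym, De by lra; auto).
  pose proof (HU2 y (ga t) (eta t) g1 g2 g3 Hg1 Hg2 Hg3 HU1' HUg2 HU3' hper P Q Rr hP hQ hR hPQ' hQR hRP'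
     0%nat 2%nat sg (1 - sg) X Z ltac:(lia) ltac:(lia) ltac:(lra) ltac:(lra)) as HC.
  cbv beta iota delta [tri_side] in HC.
  specialize (HC hX hZ). unfold g1, g3 in HC.
  replace (sg * t) with s in HC by (unfold sg; field; lra).
  replace ((1 - (1 - sg)) * t) with s in HC by (unfold sg; field; lra).
  assert (d (ga s) (eta s) <= sg * (c + eps * t)) by lra.
  unfold sg in H1. fold c.
  apply Rmult_le_reg_r with s; [lra|]. unfold Rdiv. rewrite Rmult_assoc, Rinv_l by lra.
  rewrite Rmult_1_r. replace ((c * / t + eps) * s) with (s / t * (c + eps * t)) by (field; lra). lra.
Qed.
End G.


Lemma right_lim_plus f g l1 l2 : right_lim_is f l1 -> right_lim_is g l2 ->
  right_lim_is (fun t => f t + g t) (l1 + l2).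
Proof. intros H1 H2 e he. destruct (H1 (e/2) ltac:(lra)) as [d1 [hd1 H1']].
  destruct (H2 (e/2) ltac:(lra)) as [d2 [hd2 H2']]. exists (Rmin d1 d2). split. apply Rmin_glb_lt; auto.
  intros t ht. pose proof (Rmin_l d1 d2). pose proof (Rmin_r d1 d2).
  specialize (H1' t ltac:(lra)). specialize (H2' t ltac:(lra)).
  apply Rabs_def2 in H1'. apply Rabs_def2 in H2'. apply Rabs_def1; lra. Qed.

Lemma seq_lim_eq u l : Un_cv u l -> seq_lim u = l.
Proof. intros H. unfold seq_lim. apply (UL_sequence u).
  apply (epsilon_spec (inhabits 0) (Un_cv u)). exists l; auto. auto. Qed.

Lemma cv_const c : Un_cv (fun _ => c) c.
Proof. intros e he. exists 0%nat. intros. unfold Rdist. rewrite Rminus_diag, Rabs_R0. auto. Qed.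

Section F.
Variables (Y : Type) (d : Y -> Y -> R) (kappa : R).
Hypothesis Hmet : is_metric d.
Hypothesis Hcat : locally_CAT d kappa.

Lemma dgerm_spec y g h : germ d y g -> germ d y h -> right_lim_is (fun t => d (g t) (h t) / t) (dgerm d g h).
Proof. intros Hg Hh. destruct (germ_lim Y d kappa Hmet Hcat y g h Hg Hh) as [L HL].
  unfold dgerm. rewrite (right_lim0_eq _ L HL). auto. Qed.

Lemma dgerm_tri y g h k : germ d y g -> germ d y h -> germ d y k ->
  dgerm d g k <= dgerm d g h + dgerm d h k.
Proof. intros Hg Hh Hk.
  apply (right_lim_le (fun t => d (g t) (k t) / t) (fun t => d (g t) (h t) / t + d (h t) (k t) / t) _ _ 1).
  lra. intros t ht. pose proof (d_tri Y d Hmet (g t) (h t) (k t)).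
  unfold Rdiv. rewrite <- Rmult_plus_distr_r. apply Rmult_le_compat_r; auto. left; apply Rinv_0_lt_compat; lra.
  apply (dgerm_spec y); auto. apply right_lim_plus; apply (dgerm_spec y); auto. Qed.

Lemma dgerm_sym g h : dgerm d g h = dgerm d h g.
Proof. unfold dgerm. f_equal. apply functional_extensionality. intros t. rewrite (d_sym Y d Hmet). auto. Qed.

Lemma dgerm_nonneg y g h : germ d y g -> germ d y h -> 0 <= dgerm d g h.
Proof. intros Hg Hh. apply (right_lim_le (fun _ => 0) (fun t => d (g t) (h t) / t) 0 _ 1). lra.
  intros t ht. apply Rdiv_le_0_compat. apply d_nonneg; auto. lra.
  apply right_lim_const with 1; auto. lra. apply (dgerm_spec y); auto. Qed.

Lemma germ_const y : germ d y (fun _ => y).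
Proof. split; auto. exists 1, 0. split; [lra|]. split; [lra|]. intros. rewrite d_refl by auto. ring. Qed.

Lemma germ_geod y z g : geod d g y z -> germ d y g.
Proof. intros [h0 [h1 H]]. split; auto. exists 1, (d y z). split; [lra|]. split. apply d_nonneg; auto.
  intros s t hs ht. rewrite H by lra. ring. Qed.

Lemma dgerm_geod y z g : geod d g y z -> dgerm d g (fun _ => y) = d y z.
Proof. intros Hg. pose proof Hg as [h0 [h1 H]]. unfold dgerm. apply right_lim0_eq.
  apply right_lim_const with 1; [lra|]. intros t ht. rewrite <- h0 at 1. rewrite H by lra.
  rewrite Rminus_0_r, Rabs_right by lra. field. lra. Qed.

Lemma tvec_cv y v w : tvec d y v -> germ d y w -> exists l, Un_cv (fun n => dgerm d (v n) w) l.
Proof. intros [Hg HC] Hw.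
  assert (Hc : Cauchy_crit (fun n => dgerm d (v n) w)).
  { intros e he. destruct (HC e he) as [N HN]. exists N. intros n m hn hm. unfold Rdist.
    specialize (HN n m hn hm).
    pose proof (dgerm_tri y (v n) (v m) w (Hg n) (Hg m) Hw).
    pose proof (dgerm_tri y (v m) (v n) w (Hg m) (Hg n) Hw).
    rewrite (dgerm_sym (v m) (v n)) in H0. apply Rabs_def1; lra. }
  destruct (Rcomplete.R_complete _ Hc) as [l Hl]. exists l; auto. Qed.

Lemma tinner_bound y v z g : tvec d y v -> geod d g y z ->
  0 <= tnorm d y v /\ tinner d y v (tclass g) <= tnorm d y v * d y z.
Proof.
  intros Hv Hg. pose proof (germ_geod y z g Hg) as Gg. pose proof (germ_const y) as G0.
  pose proof Hv as [Hvg _].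
  destruct (tvec_cv y v (fun _ => y) Hv G0) as [N HN].
  destruct (tvec_cv y v g Hv Gg) as [T HT].
  assert (eN : tnorm d y v = N).
  { unfold tnorm, tdist, tzero. apply seq_lim_eq. auto. }
  assert (eM : tnorm d y (tclass g) = d y z).
  { unfold tnorm, tdist, tzero, tclass. apply seq_lim_eq. rewrite (dgerm_geod y z g Hg). apply cv_const. }
  assert (eT : tdist d v (tclass g) = T).
  { unfold tdist, tclass. apply seq_lim_eq. auto. }
  assert (hN0 : 0 <= N).
  { apply (Rle_cv_lim (Un := fun _ => 0) (Vn := fun n => dgerm d (v n) (fun _ => y))); auto.
    intros n. apply (dgerm_nonneg y); auto. apply cv_const. }
  assert (h1 : N - d y z <= T).
  { apply (Rle_cv_lim (Un := fun n => dgerm d (v n) (fun _ => y) - d y z) (Vn := fun n => dgerm d (v n) g)).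
    intros n. pose proof (dgerm_tri y (v n) g (fun _ => y) (Hvg n) Gg G0). rewrite (dgerm_geod y z g Hg) in H. lra.
    apply CV_minus; auto. apply cv_const. auto. }
  assert (h2 : d y z - N <= T).
  { apply (Rle_cv_lim (Un := fun n => d y z - dgerm d (v n) (fun _ => y)) (Vn := fun n => dgerm d (v n) g)).
    intros n. pose proof (dgerm_tri y g (v n) (fun _ => y) Gg (Hvg n) G0). rewrite (dgerm_geod y z g Hg) in H.
    rewrite (dgerm_sym g (v n)) in H. lra.
    apply CV_minus; auto. apply cv_const. auto. }
  split. lra.
  unfold tinner. rewrite eN, eM, eT.
  assert (0 <= d y z) by (apply d_nonneg; auto).
  assert ((N - d y z)^2 <= T^2).
  { destruct (Rle_dec 0 (N - d y z)). apply pow_incr; lra.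
    replace ((N - d y z)^2) with ((d y z - N)^2) by ring. apply pow_incr; lra. }
  nra.
Qed.
End F.


Lemma lub_bound (S : R -> Prop) B : S 0 -> 0 <= B -> (forall q, S q -> q <= B) ->
  exists s, Lub_Rbar S = Finite s /\ 0 <= s <= B.
Proof. intros H0 hB HB. destruct (Lub_Rbar_correct S) as [Hub Hl].
  assert (h1 : Rbar_le (Lub_Rbar S) B) by (apply Hl; intros q hq; simpl; apply HB; auto).
  assert (h2 : Rbar_le 0 (Lub_Rbar S)) by (apply Hub; auto).
  destruct (Lub_Rbar S) as [s| |]; simpl in *; try contradiction. exists s; auto. Qed.

Theorem proposition3p9 (kappa lam : R) (Y : Type) (d : Y -> Y -> R) (E : Y -> Rbar)
  (Hmet : is_metric d) (Hcomp : complete d) (Hgeo : geodesic_space d)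
  (Hcat : locally_CAT d kappa)
  (HE : forall y, E y <> m_infty)
  (Hconv : lambda_convex d lam E) (Hlsc : lsc d E) :
  forall y, in_dom_subdiff d lam E y ->
    Rbar_le (slope d E y)
            (Glb_Rbar (fun a => exists v, minus_subdiff d lam E y v /\ a = tnorm d y v))
    /\ is_finite (slope d E y).
Proof.
  intros y [hdom [v0 hv0]].
  set (Sr := fun r q => q = 0 \/ exists z, 0 < d y z < r /\ q = slope_quot d E y z).
  assert (Hb : forall v, minus_subdiff d lam E y v -> forall r, 0 < r ->
     exists s, Lub_Rbar (Sr r) = Finite s /\ 0 <= s <= tnorm d y v + Rabs lam * r / 2).
  { intros v [_ [Hv Hsub]] r hr.
    assert (hN : 0 <= tnorm d y v).
    { destruct (Hsub y) as [g [Hg _]]. destruct (tinner_bound Y d kappa Hmet Hcat y v y g Hv Hg); auto. }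
    apply lub_bound. left; auto. pose proof (Rabs_pos lam). nra.
    intros q [hq|[z [hz hq]]]. subst. pose proof (Rabs_pos lam). nra.
    subst q. destruct (Hsub z) as [g [Hg Hle]].
    destruct (tinner_bound Y d kappa Hmet Hcat y v z g Hv Hg) as [_ Hin].
    unfold slope_quot. destruct (E z) as [ez| |] eqn:Ez; simpl in Hle.
    - remember (d y z) as D.
      assert (real (E y) - ez <= tnorm d y v * D + Rabs lam / 2 * D^2).
      { assert (- (lam / 2 * D^2) <= Rabs lam / 2 * D^2).
        { assert (0 <= D^2) by nra. destruct (Rle_dec 0 lam). rewrite Rabs_right by lra. nra. rewrite Rabs_left by lra. nra. }
        lra. }
      apply Rmult_le_reg_r with D; [lra|]. unfold Rdiv. rewrite Rmult_assoc, Rinv_l, Rmult_1_r by lra.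
      apply Rmax_lub. pose proof (Rabs_pos lam). apply Rmult_le_pos; [|lra]. assert (0 <= Rabs lam * r) by (apply Rmult_le_pos; lra). lra.
      assert (Rabs lam / 2 * D^2 <= Rabs lam * r / 2 * D).
      { pose proof (Rabs_pos lam). replace (Rabs lam / 2 * D^2) with ((Rabs lam / 2 * D) * D) by ring.
        replace (Rabs lam * r / 2 * D) with ((Rabs lam / 2 * D) * r) by field. apply Rmult_le_compat_l; nra. }
      nra.
    - pose proof (Rabs_pos lam). nra.
    - contradiction. }
  set (SL := fun s => exists r, 0 < r /\ Lub_Rbar (Sr r) = Finite s).
  assert (hslope : slope d E y = Glb_Rbar SL) by reflexivity.
  destruct (Glb_Rbar_correct SL) as [Hlb Hgr].
  assert (Hle : forall v, minus_subdiff d lam E y v -> Rbar_le (slope d E y) (tnorm d y v)).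
  { intros v Hv. rewrite hslope.
    destruct (Glb_Rbar SL) as [sl| |] eqn:Esl.
    - simpl. destruct (Rle_dec sl (tnorm d y v)) as [|Hn]; auto. exfalso.
      set (r := (sl - tnorm d y v) / (Rabs lam + 1)).
      assert (hr : 0 < r) by (unfold r; pose proof (Rabs_pos lam); apply Rdiv_lt_0_compat; lra).
      destruct (Hb v Hv r hr) as [s [Hs Hsb]].
      assert (SL s) by (exists r; auto).
      specialize (Hlb s H). simpl in Hlb.
      assert (Rabs lam * r / 2 < sl - tnorm d y v).
      { unfold r. pose proof (Rabs_pos lam). 
        replace (Rabs lam * ((sl - tnorm d y v) / (Rabs lam + 1)) / 2) with ((sl - tnorm d y v) * (Rabs lam / (2 * (Rabs lam + 1)))) by (field; lra).
        assert (Rabs lam / (2 * (Rabs lam + 1)) < 1).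
        { apply Rmult_lt_reg_r with (2 * (Rabs lam + 1)); [lra|]. unfold Rdiv. rewrite Rmult_assoc, Rinv_l by lra. lra. }
        nra. }
      lra.
    - destruct (Hb v Hv 1 ltac:(lra)) as [s [Hs _]]. assert (SL s) by (exists 1; split; auto; lra).
      specialize (Hlb s H). simpl in Hlb. contradiction.
    - simpl. auto. }
  split.
  - destruct (Glb_Rbar_correct (fun a => exists v, minus_subdiff d lam E y v /\ a = tnorm d y v)) as [_ Hg2].
    apply Hg2. intros a [v [Hv ->]]. apply Hle; auto.
  - rewrite hslope.
    assert (h0 : Rbar_le 0 (Glb_Rbar SL)).
    { apply Hgr. intros s [r [hr Hs]]. destruct (Hb v0 hv0 r hr) as [s' [Hs' Hb']]. rewrite Hs in Hs'.
      injection Hs' as ->. simpl. lra. }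
    destruct (Hb v0 hv0 1 ltac:(lra)) as [s [Hs _]]. assert (SL s) by (exists 1; split; auto; lra).
    specialize (Hlb s H).
    destruct (Glb_Rbar SL); simpl in *; try contradiction. reflexivity.
Qed.
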